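(* Let $p^*_\infty$ be the correlation defined in the context. Then $p^*_\infty\in\mathcal C_{qs}^{3,4,\infty,\infty}$, and there exist constants $c>0$, $\delta_0>0$ such that for every $\delta\in(0,\delta_0]$, every positive integer $N$, and every $p\in\mathcal C_{q\le N}^{3,4,\infty,\infty}$ with $|p-p^*_\infty|_{corr}\le\delta$, we have $N\ge c\,\delta^{-1/32}$ (i.e. $N=\Omega(\delta^{-1/32})$).
   Context: Work on $\ell^2(\mathbb N)$ with orthonormal basis $\{|i\rangle\}_{i\in\mathbb N}$. Let $c_i=C(i+1)^{-8}$ with $C>0$ such that $\sum_{i\ge0}c_i^2=1$, and $|\Psi_\infty\rangle=\sum_{i\ge0}c_i|ii\rangle$. Let $O_k(\mu,s):=\cos\mu\,(|k\rangle\langle k|-|k+1\rangle\langle k+1|)+s\sin\mu\,(|k\rangle\langle k+1|+|k+1\rangle\langle k|)$, $s\in\{+,-\}$, which has one $+1$ and one $-1$ unit eigenvector in $\mathrm{span}\{|k\rangle,|k+1\rangle\}$. Let $\theta_m=\arctan(c_{2m+1}/c_{2m})$, $\mu_m=\arctan(\sin2\theta_m)$, $\theta'_m=\arctan(c_{2m+2}/c_{2m+1})$, $\mu'_m=\arctan(\sin2\theta'_m)$. Questions: Alice $\{0,1,2\}$, Bob $\{0,1,2,3\}$; answers $\mathbb N$; ''outcome $a\leftrightarrow v$'' means the projector for $a$ is $|v\rangle\langle v|$; $m$ ranges over $\mathbb N$. Alice $x=0$: $a\leftrightarrow|a\rangle$; $x=1$: $2m,2m+1\leftrightarrow$ the $+1,-1$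 eigenvectors of $O_{2m}(\pi/2,+)$; $x=2$: $0\leftrightarrow|0\rangle$, $2m+1,2m+2\leftrightarrow$ the $+1,-1$ eigenvectors of $O_{2m+1}(\pi/2,+)$. Bob $y=0$ (resp. $1$): $2m,2m+1\leftrightarrow$ the $\pm1$ eigenvectors of $O_{2m}(\mu_m,+)$ (resp. $O_{2m}(\mu_m,-)$); $y=2$ (resp. $3$): $0\leftrightarrow|0\rangle$, $2m+1,2m+2\leftrightarrow$ the $\pm1$ eigenvectors of $O_{2m+1}(\mu'_m,+)$ (resp. $O_{2m+1}(\mu'_m,-)$). Then $p^*_\infty(a,b|x,y)=\langle\Psi_\infty|A^a_x\otimes B^b_y|\Psi_\infty\rangle$. A strategy: Hilbert spaces $\mathcal H_A,\mathcal H_B$, unit $|\psi\rangle\in\mathcal H_A\otimes\mathcal H_B$, projective measurements $\{A^a_x\}_a$, $\{B^b_y\}_b$ (possibly countably many outcomes), producing $p(a,b|x,y)=\langle\psi|A^a_x\otimes B^b_y|\psi\rangle$. $\mathcal C_{qs}^{3,4,\infty,\infty}$: correlations with question sets of sizes $3,4$ and answer sets $\mathbb N$ produced by some strategy (arbitrary Hilbert spaces, no Schmidt rank restriction). $\mathcal C_{q\le N}^{3,4,\infty,\infty}$: those produced by a strategy whose state has Schmidt rank at most $N$. Distance: $|p-p'|_{corr}:=\sup_{x,y}\sum_{a,b}|p(a,b|x,y)-p'(a,b|x,y)|$. *)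

(* Defs.v *)
From Stdlib Require Import Reals Lra Lia List Arith ClassicalEpsilon.
Import ListNotations.
Open Scope R_scope.

Record C := mkC { cre : R ; cim : R }.
Definition C0 : C := mkC 0 0.
Definition RtoC (r : R) : C := mkC r 0.
Definition Cadd (z w : C) : C := mkC (cre z + cre w) (cim z + cim w).
Definition Copp (z : C) : C := mkC (- cre z) (- cim z).
Definition Csub (z w : C) : C := Cadd z (Copp w).
Definition Cmul (z w : C) : C :=
  mkC (cre z * cre w - cim z * cim w) (cre z * cim w + cim z * cre w).
Definition Cscale (r : R) (z : C) : C := mkC (r * cre z) (r * cim z).
Definition Cconj (z : C) : C := mkC (cre z) (- cim z).
Definition Cnorm2 (z : C) : R := cre z * cre z + cim z * cim z.

Definition lsum {T : Type} (f : T -> C) (L : list T) : C :=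
  fold_right (fun x acc => Cadd (f x) acc) C0 L.
Definition rlsum {T : Type} (f : T -> R) (L : list T) : R :=
  fold_right (fun x acc => f x + acc) 0 L.

Definition has_sum {T : Type} (f : T -> C) (s : C) : Prop :=
  forall eps, 0 < eps -> exists L0 : list T,
    forall L, NoDup L -> incl L0 L -> Cnorm2 (Csub (lsum f L) s) < eps.

(* the value of the sum (unspecified if the family is not summable) *)
Definition tsum {T : Type} (f : T -> C) : C :=
  epsilon (inhabits C0) (fun s => has_sum f s).

(* The Hilbert space l^2(I) over an arbitrary index type I.
   (Every complex Hilbert space is unitarily isomorphic to some l^2(I),
   and H_A (x) H_B = l^2(IA) (x) l^2(IB) = l^2(IA * IB).)               *)
Definition l2 {T : Type} (v : T -> C) : Prop :=
  exists M, forall L, NoDup L -> rlsum (fun i => Cnorm2 (v i)) L <= M.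

Definition inner {T : Type} (u v : T -> C) : C :=
  tsum (fun i => Cmul (Cconj (u i)) (v i)).
Definition sqnorm {T : Type} (v : T -> C) : R := cre (inner v v).

Definition vadd {T : Type} (u v : T -> C) : T -> C := fun i => Cadd (u i) (v i).
Definition vsub {T : Type} (u v : T -> C) : T -> C := fun i => Csub (u i) (v i).
Definition vscale {T : Type} (c : C) (v : T -> C) : T -> C := fun i => Cmul c (v i).

(* operators (only their action on l^2 vectors matters) *)
Definition Op (T : Type) := (T -> C) -> (T -> C).

Definition is_projector {T : Type} (P : Op T) : Prop :=
  (forall v, l2 v -> l2 (P v)) /\
  (forall u v c, l2 u -> l2 v -> P (vadd u (vscale c v)) = vadd (P u) (vscale c (P v))) /\
  (forall v, l2 v -> P (P v) = P v) /\
  (forall u v, l2 u -> l2 v -> inner u (P v) = inner (P u) v).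

Definition psum_vec {T : Type} (A : nat -> Op T) (n : nat) (v : T -> C) : T -> C :=
  fun i => lsum (fun a => A a v i) (seq 0 n).

(* projective measurement with outcomes in nat: projectors summing to the
   identity in the strong operator topology *)
Definition is_PVM {T : Type} (A : nat -> Op T) : Prop :=
  (forall a, is_projector (A a)) /\
  (forall v, l2 v -> forall eps, 0 < eps -> exists n0, forall n, (n0 <= n)%nat ->
      sqnorm (vsub v (psum_vec A n v)) < eps).

(* (P (x) Q) psi on l^2(IA * IB) *)
Definition tens {IA IB : Type} (P : Op IA) (Q : Op IB) (psi : IA * IB -> C) : IA * IB -> C :=
  fun ij => P (fun i' => Q (fun j' => psi (i', j')) (snd ij)) (fst ij).

(* correlations: p a b x y = p(a,b|x,y); only x < 3, y < 4 are meaningful *)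
Definition corr := nat -> nat -> nat -> nat -> R.

Definition corr_of {IA IB : Type} (psi : IA * IB -> C)
  (A : nat -> nat -> Op IA) (B : nat -> nat -> Op IB) : corr :=
  fun a b x y => cre (inner psi (tens (A x a) (B y b) psi)).

Record strategy := mkStrat {
  IA : Type; IB : Type;
  st : IA * IB -> C;
  MA : nat -> nat -> Op IA;   (* MA x a = A^a_x *)
  MB : nat -> nat -> Op IB }. (* MB y b = B^b_y *)

Definition valid_strategy (S : strategy) : Prop :=
  l2 (st S) /\ sqnorm (st S) = 1 /\
  (forall x, (x < 3)%nat -> is_PVM (MA S x)) /\
  (forall y, (y < 4)%nat -> is_PVM (MB S y)).

Definition produces (S : strategy) (p : corr) : Prop :=
  forall a b x y, (x < 3)%nat -> (y < 4)%nat ->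
    p a b x y = corr_of (st S) (MA S) (MB S) a b x y.

Definition schmidt_rank_le {IA IB : Type} (N : nat) (psi : IA * IB -> C) : Prop :=
  exists (u : nat -> IA -> C) (v : nat -> IB -> C),
    (forall k, l2 (u k)) /\ (forall k, l2 (v k)) /\
    forall i j, psi (i, j) = lsum (fun k => Cmul (u k i) (v k j)) (seq 0 N).

Definition in_Cqs (p : corr) : Prop :=
  exists S, valid_strategy S /\ produces S p.

Definition in_CqN (N : nat) (p : corr) : Prop :=
  exists S, valid_strategy S /\ schmidt_rank_le N (st S) /\ produces S p.

Definition corr_dist_le (p q : corr) (delta : R) : Prop :=
  forall x y, (x < 3)%nat -> (y < 4)%nat -> forall n,
    rlsum (fun a => rlsum (fun b => Rabs (p a b x y - q a b x y)) (seq 0 n)) (seq 0 n)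
      <= delta.

Definition Cnorm_const : R :=
  / sqrt (cre (tsum (fun i : nat => RtoC (/ (INR (S i)) ^ 16)))).
Definition cc (i : nat) : R := Cnorm_const / (INR (S i)) ^ 8.

Definition theta (m : nat) : R := atan (cc (2 * m + 1) / cc (2 * m)).
Definition mu (m : nat) : R := atan (sin (2 * theta m)).
Definition theta' (m : nat) : R := atan (cc (2 * m + 2) / cc (2 * m + 1)).
Definition mu' (m : nat) : R := atan (sin (2 * theta' m)).

Definition Psi_inf (ij : nat * nat) : C :=
  if Nat.eqb (fst ij) (snd ij) then RtoC (cc (fst ij)) else C0.

Definition O_op (k : nat) (m : R) (s : R) : Op nat := fun v i =>
  if Nat.eqb i k then Cadd (Cscale (cos m) (v k)) (Cscale (s * sin m) (v (S k)))
  else if Nat.eqb i (S k) then Cadd (Cscale (s * sin m) (v k)) (Cscale (- cos m) (v (S k)))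
  else C0.

Definition Pi_op (k : nat) : Op nat := fun v i =>
  if orb (Nat.eqb i k) (Nat.eqb i (S k)) then v i else C0.

(* projector onto the eps-eigenvector (eps = +1 or -1) of O_k(mu,s):
   (Pi_k + eps O_k(mu,s)) / 2, i.e. |w><w| for the unit eps-eigenvector w *)
Definition eigproj (k : nat) (m s eps : R) : Op nat := fun v i =>
  Cscale (1 / 2) (Cadd (Pi_op k v i) (Cscale eps (O_op k m s v i))).

Definition ket_proj (a : nat) : Op nat := fun v i =>
  if Nat.eqb i a then v a else C0.

Definition sgn (a : nat) : R := if Nat.even a then 1 else -1.

Definition A_star (x a : nat) : Op nat :=
  match x with
  | O => ket_proj a
  | 1%nat => eigproj (2 * (a / 2)) (PI / 2) 1 (sgn a)
  | _ => match a with
         | O => ket_proj 0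
         | S a' => eigproj (2 * (a' / 2) + 1) (PI / 2) 1 (sgn a')
         end
  end.

Definition B_star (y b : nat) : Op nat :=
  match y with
  | O => eigproj (2 * (b / 2)) (mu (b / 2)) 1 (sgn b)
  | 1%nat => eigproj (2 * (b / 2)) (mu (b / 2)) (-1) (sgn b)
  | 2%nat => match b with
             | O => ket_proj 0
             | S b' => eigproj (2 * (b' / 2) + 1) (mu' (b' / 2)) 1 (sgn b')
             end
  | _ => match b with
         | O => ket_proj 0
         | S b' => eigproj (2 * (b' / 2) + 1) (mu' (b' / 2)) (-1) (sgn b')
         end
  end.

Definition pstar : corr := corr_of Psi_inf A_star B_star.

(* Main.v *)
Require Import Defs.
From Stdlib Require Import Reals Lra Lia List Arith ZArith ClassicalEpsilon FunctionalExtensionality Permutation Psatz.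
Import ListNotations.
Require Import Defs.
Open Scope R_scope.

Lemma C_ext : forall z w, cre z = cre w -> cim z = cim w -> z = w.
Proof. intros [a b] [c d]; simpl; intros; subst; reflexivity. Qed.

Definition Cone : C := mkC 1 0.

Lemma Cring_theory : ring_theory C0 Cone Cadd Cmul Csub Copp eq.
Proof.
  constructor; intros; apply C_ext; unfold Csub, Cadd, Cmul, Copp, C0, Cone; simpl; ring.
Qed.
Add Ring Cring : Cring_theory.

Lemma Cconj_add z w : Cconj (Cadd z w) = Cadd (Cconj z) (Cconj w).
Proof. apply C_ext; simpl; ring. Qed.
Lemma Cconj_mul z w : Cconj (Cmul z w) = Cmul (Cconj z) (Cconj w).
Proof. apply C_ext; simpl; ring. Qed.
Lemma Cconj_conj z : Cconj (Cconj z) = z.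
Proof. apply C_ext; simpl; ring. Qed.
Lemma Cconj_0 : Cconj C0 = C0.
Proof. apply C_ext; simpl; ring. Qed.
Lemma Cconj_opp z : Cconj (Copp z) = Copp (Cconj z).
Proof. apply C_ext; simpl; ring. Qed.
Lemma Cscale_mul r z : Cscale r z = Cmul (RtoC r) z.
Proof. apply C_ext; simpl; ring. Qed.
Lemma RtoC_add a b : RtoC (a + b) = Cadd (RtoC a) (RtoC b).
Proof. apply C_ext; simpl; ring. Qed.
Lemma RtoC_mul a b : RtoC (a * b) = Cmul (RtoC a) (RtoC b).
Proof. apply C_ext; simpl; ring. Qed.
Lemma Cnorm2_nonneg z : 0 <= Cnorm2 z.
Proof. unfold Cnorm2; nra. Qed.
Lemma Cnorm2_mul z w : Cnorm2 (Cmul z w) = Cnorm2 z * Cnorm2 w.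
Proof. unfold Cnorm2; simpl; ring. Qed.
Lemma Cmul_conj_self z : Cmul (Cconj z) z = RtoC (Cnorm2 z).
Proof. apply C_ext; unfold Cnorm2; simpl; ring. Qed.
Lemma Cnorm2_conj z : Cnorm2 (Cconj z) = Cnorm2 z.
Proof. unfold Cnorm2; simpl; ring. Qed.

Lemma lsum_nil {T} (f : T -> C) : lsum f [] = C0.
Proof. reflexivity. Qed.
Lemma lsum_cons {T} (f : T -> C) a L : lsum f (a :: L) = Cadd (f a) (lsum f L).
Proof. reflexivity. Qed.
Lemma lsum_app {T} (f : T -> C) L1 L2 : lsum f (L1 ++ L2) = Cadd (lsum f L1) (lsum f L2).
Proof. induction L1; simpl. ring. rewrite IHL1. ring. Qed.
Lemma rlsum_app {T} (f : T -> R) L1 L2 : rlsum f (L1 ++ L2) = rlsum f L1 + rlsum f L2.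
Proof. induction L1; simpl. ring. rewrite IHL1. ring. Qed.
Lemma cre_lsum {T} (f : T -> C) L : cre (lsum f L) = rlsum (fun x => cre (f x)) L.
Proof. induction L; simpl; auto. rewrite IHL; auto. Qed.
Lemma cim_lsum {T} (f : T -> C) L : cim (lsum f L) = rlsum (fun x => cim (f x)) L.
Proof. induction L; simpl; auto. rewrite IHL; auto. Qed.
Lemma lsum_ext {T} (f g : T -> C) L : (forall x, In x L -> f x = g x) -> lsum f L = lsum g L.
Proof. induction L; simpl; intros; auto. rewrite H, IHL; auto. Qed.
Lemma rlsum_ext {T} (f g : T -> R) L : (forall x, In x L -> f x = g x) -> rlsum f L = rlsum g L.
Proof. induction L; simpl; intros; auto. rewrite H, IHL; auto. Qed.
Lemma lsum_add {T} (f g : T -> C) L : lsum (fun x => Cadd (f x) (g x)) L = Cadd (lsum f L) (lsum g L).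
Proof. induction L; simpl. ring. rewrite IHL. ring. Qed.
Lemma lsum_mull {T} (f : T -> C) c L : lsum (fun x => Cmul c (f x)) L = Cmul c (lsum f L).
Proof. induction L; simpl. ring. rewrite IHL. ring. Qed.
Lemma lsum_mulr {T} (f : T -> C) c L : lsum (fun x => Cmul (f x) c) L = Cmul (lsum f L) c.
Proof. induction L; simpl. ring. rewrite IHL. ring. Qed.
Lemma lsum_conj {T} (f : T -> C) L : Cconj (lsum f L) = lsum (fun x => Cconj (f x)) L.
Proof. induction L; simpl. apply Cconj_0. rewrite Cconj_add, IHL. auto. Qed.
Lemma lsum_zero {T} L : lsum (fun _ : T => C0) L = C0.
Proof. induction L; simpl; auto. rewrite IHL; ring. Qed.
Lemma lsum_swap {T U} (f : T -> U -> C) L1 L2 :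
  lsum (fun x => lsum (fun y => f x y) L2) L1 = lsum (fun y => lsum (fun x => f x y) L1) L2.
Proof.
  induction L1; simpl. rewrite lsum_zero; auto.
  rewrite IHL1, <- lsum_add. auto.
Qed.
Lemma rlsum_add {T} (f g : T -> R) L : rlsum (fun x => f x + g x) L = rlsum f L + rlsum g L.
Proof. induction L; simpl. ring. rewrite IHL. ring. Qed.
Lemma rlsum_scal {T} (f : T -> R) c L : rlsum (fun x => c * f x) L = c * rlsum f L.
Proof. induction L; simpl. ring. rewrite IHL. ring. Qed.
Lemma rlsum_opp {T} (f : T -> R) L : rlsum (fun x => - f x) L = - rlsum f L.
Proof. induction L; simpl. ring. rewrite IHL. ring. Qed.
Lemma rlsum_zero {T} L : rlsum (fun _ : T => 0) L = 0.
Proof. induction L; simpl; auto. rewrite IHL; ring. Qed.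
Lemma rlsum_le {T} (f g : T -> R) L : (forall x, In x L -> f x <= g x) -> rlsum f L <= rlsum g L.
Proof. induction L; simpl; intros. lra. assert (f a <= g a) by auto. assert (rlsum f L <= rlsum g L) by auto. lra. Qed.
Lemma rlsum_nonneg {T} (f : T -> R) L : (forall x, In x L -> 0 <= f x) -> 0 <= rlsum f L.
Proof. intros. rewrite <- (rlsum_zero L). apply rlsum_le; auto. Qed.
Lemma rlsum_abs {T} (f : T -> R) L : Rabs (rlsum f L) <= rlsum (fun x => Rabs (f x)) L.
Proof. induction L; simpl. rewrite Rabs_R0; lra.
  eapply Rle_trans. apply Rabs_triang. lra. Qed.
Lemma rlsum_swap {T U} (f : T -> U -> R) L1 L2 :
  rlsum (fun x => rlsum (fun y => f x y) L2) L1 = rlsum (fun y => rlsum (fun x => f x y) L1) L2.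
Proof.
  induction L1; simpl. rewrite rlsum_zero; auto.
  rewrite IHL1, <- rlsum_add. auto.
Qed.

Definition deq {T} (x y : T) : {x = y} + {x <> y} := excluded_middle_informative (x = y).

Lemma rlsum_remove_le {T} (f : T -> R) a L : (forall x, 0 <= f x) ->
  rlsum f (remove deq a L) <= rlsum f L.
Proof.
  intros Hf. induction L; simpl. lra.
  destruct (deq a a0); simpl. specialize (Hf a0); lra. lra.
Qed.

Lemma rlsum_in_remove {T} (f : T -> R) a L : (forall x, 0 <= f x) -> In a L ->
  f a + rlsum f (remove deq a L) <= rlsum f L.
Proof.
  intros Hf. induction L; simpl; intros H. contradiction.
  destruct (deq a a0).
  - subst. pose proof (rlsum_remove_le f a0 L Hf). lra.
  - destruct H. congruence. simpl. specialize (IHL H). lra.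
Qed.

Lemma rlsum_incl_le {T} (f : T -> R) L1 L2 : (forall x, 0 <= f x) -> NoDup L1 -> incl L1 L2 ->
  rlsum f L1 <= rlsum f L2.
Proof.
  intros Hf H. revert L2. induction H as [|a L1 Ha HN IH]; intros L2 Hi; simpl.
  - apply rlsum_nonneg; auto.
  - assert (Ha2 : In a L2) by (apply Hi; simpl; auto).
    assert (Hr : incl L1 (remove deq a L2)).
    { intros x Hx. apply in_in_remove. intro; subst; contradiction. apply Hi; simpl; auto. }
    pose proof (IH _ Hr). pose proof (rlsum_in_remove f a L2 Hf Ha2). lra.
Qed.

Lemma nodup_split {T} (L0 L : list T) : NoDup L0 -> NoDup L -> incl L0 L ->
  exists L', Permutation L (L0 ++ L') /\ (forall x, In x L' -> ~ In x L0).
Proof.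
  intros H0 H Hi.
  exists (filter (fun x => if in_dec deq x L0 then false else true) L).
  split.
  - apply NoDup_Permutation; auto.
    + apply NoDup_app; auto. apply NoDup_filter; auto.
      intros x Hx Hx'. apply filter_In in Hx'. destruct Hx' as [_ Hx'].
      destruct (in_dec deq x L0); [discriminate|contradiction].
    + intros x; split; intros Hx.
      * apply in_or_app. destruct (in_dec deq x L0); auto. right. apply filter_In.
        split; auto. destruct (in_dec deq x L0); auto; contradiction.
      * apply in_app_or in Hx. destruct Hx; auto. apply filter_In in H1; tauto.
  - intros x Hx. apply filter_In in Hx. destruct Hx as [_ Hx].
    destruct (in_dec deq x L0); [discriminate|auto].
Qed.

Lemma rlsum_perm {T} (f : T -> R) L1 L2 : Permutation L1 L2 -> rlsum f L1 = rlsum f L2.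
Proof. induction 1; simpl; lra. Qed.
Lemma lsum_perm {T} (f : T -> C) L1 L2 : Permutation L1 L2 -> lsum f L1 = lsum f L2.
Proof. induction 1; simpl.
  - auto.
  - rewrite IHPermutation; auto.
  - ring.
  - congruence. Qed.

Lemma rlsum_zero_out {T} (f : T -> R) L : (forall x, In x L -> f x = 0) -> rlsum f L = 0.
Proof. intros. rewrite (rlsum_ext f (fun _ => 0)); auto. apply rlsum_zero. Qed.
Lemma lsum_zero_out {T} (f : T -> C) L : (forall x, In x L -> f x = C0) -> lsum f L = C0.
Proof. intros. rewrite (lsum_ext f (fun _ => C0)); auto. apply lsum_zero. Qed.

Lemma rlsum_support {T} (f : T -> R) L0 L : NoDup L0 -> NoDup L -> incl L0 L ->
  (forall x, ~ In x L0 -> f x = 0) -> rlsum f L = rlsum f L0.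
Proof.
  intros H0 H Hi Hz. destruct (nodup_split L0 L H0 H Hi) as [L' [HP HL']].
  rewrite (rlsum_perm f _ _ HP), rlsum_app, (rlsum_zero_out f L'). ring.
  intros; apply Hz; auto.
Qed.
Lemma lsum_support {T} (f : T -> C) L0 L : NoDup L0 -> NoDup L -> incl L0 L ->
  (forall x, ~ In x L0 -> f x = C0) -> lsum f L = lsum f L0.
Proof.
  intros H0 H Hi Hz. destruct (nodup_split L0 L H0 H Hi) as [L' [HP HL']].
  rewrite (lsum_perm f _ _ HP), lsum_app, (lsum_zero_out f L'). ring.
  intros; apply Hz; auto.
Qed.

Definition nd {T} (L : list T) : list T := nodup deq L.
Lemma nd_NoDup {T} (L : list T) : NoDup (nd L).
Proof. apply NoDup_nodup. Qed.
Lemma nd_In {T} (L : list T) x : In x (nd L) <-> In x L.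
Proof. apply nodup_In. Qed.

Definition rhas_sum {T} (f : T -> R) (s : R) : Prop :=
  forall eps, 0 < eps -> exists L0 : list T,
    forall L, NoDup L -> incl L0 L -> Rabs (rlsum f L - s) < eps.
Definition rbounded {T} (f : T -> R) : Prop :=
  exists M, forall L, NoDup L -> rlsum f L <= M.
Definition rabsb {T} (f : T -> R) : Prop := rbounded (fun x => Rabs (f x)).

Lemma incl_nd_l {T} (L1 L2 : list T) : incl L1 (nd (L1 ++ L2)).
Proof. intros x H. apply nd_In, in_or_app; auto. Qed.
Lemma incl_nd_r {T} (L1 L2 : list T) : incl L2 (nd (L1 ++ L2)).
Proof. intros x H. apply nd_In, in_or_app; auto. Qed.
Lemma incl_trans' {T} (a b c : list T) : incl a b -> incl b c -> incl a c.
Proof. intros H1 H2 x Hx; auto. Qed.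

Lemma rhas_sum_unique {T} (f : T -> R) s t : rhas_sum f s -> rhas_sum f t -> s = t.
Proof.
  intros Hs Ht. destruct (Req_dec s t) as [|Hne]; auto. exfalso.
  assert (He' : 0 < Rabs (s - t) / 2).
  { assert (s - t <> 0) by lra. pose proof (Rabs_pos_lt _ H). lra. }
  destruct (Hs _ He') as [L0 H0]; destruct (Ht _ He') as [L1 H1].
  set (L := nd (L0 ++ L1)).
  specialize (H0 L (nd_NoDup _) (incl_nd_l _ _)).
  specialize (H1 L (nd_NoDup _) (incl_nd_r _ _)).
  pose proof (Rabs_triang (rlsum f L - t) (s - rlsum f L)).
  replace (rlsum f L - t + (s - rlsum f L)) with (s - t) in H by ring.
  rewrite Rabs_minus_sym in H0. lra.
Qed.

Lemma rhas_sum_ext {T} (f g : T -> R) s : (forall x, f x = g x) -> rhas_sum f s -> rhas_sum g s.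
Proof.
  intros E H eps He. destruct (H eps He) as [L0 H0]. exists L0; intros.
  rewrite (rlsum_ext g f) by (intros; auto). auto.
Qed.

Lemma rhas_sum_add {T} (f g : T -> R) s t : rhas_sum f s -> rhas_sum g t ->
  rhas_sum (fun x => f x + g x) (s + t).
Proof.
  intros Hs Ht eps He.
  destruct (Hs (eps/2)) as [L0 H0]; [lra|]. destruct (Ht (eps/2)) as [L1 H1]; [lra|].
  exists (L0 ++ L1). intros L HL Hi.
  rewrite rlsum_add.
  assert (A := H0 L HL (incl_trans' _ _ _ (incl_appl _ (incl_refl _)) Hi)).
  assert (B := H1 L HL (incl_trans' _ _ _ (incl_appr _ (incl_refl _)) Hi)).
  pose proof (Rabs_triang (rlsum f L - s) (rlsum g L - t)).
  replace (rlsum f L + rlsum g L - (s + t)) with ((rlsum f L - s) + (rlsum g L - t)) by ring.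
  lra.
Qed.

Lemma rhas_sum_scal {T} (f : T -> R) c s : rhas_sum f s -> rhas_sum (fun x => c * f x) (c * s).
Proof.
  intros Hs eps He.
  destruct (Hs (eps / (Rabs c + 1))) as [L0 H0].
  { apply Rdiv_lt_0_compat; auto. pose proof (Rabs_pos c); lra. }
  exists L0; intros L HL Hi. rewrite rlsum_scal.
  replace (c * rlsum f L - c * s) with (c * (rlsum f L - s)) by ring.
  rewrite Rabs_mult. specialize (H0 L HL Hi).
  pose proof (Rabs_pos c). pose proof (Rabs_pos (rlsum f L - s)).
  assert (Rabs c + 1 > 0) by lra.
  apply Rmult_lt_compat_r with (r := Rabs c + 1) in H0; auto.
  unfold Rdiv in H0. rewrite Rmult_assoc, Rinv_l, Rmult_1_r in H0 by lra.
  nra.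
Qed.

Lemma rhas_sum_sub {T} (f g : T -> R) s t : rhas_sum f s -> rhas_sum g t ->
  rhas_sum (fun x => f x - g x) (s - t).
Proof.
  intros Hs Ht. pose proof (rhas_sum_add _ _ _ _ Hs (rhas_sum_scal _ (-1) _ Ht)).
  eapply rhas_sum_ext; [|replace (s - t) with (s + -1 * t) by ring; exact H].
  intros; simpl; ring.
Qed.

Lemma rhas_sum_zero {T} : rhas_sum (fun _ : T => 0) 0.
Proof. intros eps He. exists []. intros. rewrite rlsum_zero. rewrite Rminus_0_r, Rabs_R0; auto. Qed.

Lemma rhas_sum_finite {T} (f : T -> R) L0 : NoDup L0 -> (forall x, ~ In x L0 -> f x = 0) ->
  rhas_sum f (rlsum f L0).
Proof.
  intros H0 Hz eps He. exists L0. intros L HL Hi.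
  rewrite (rlsum_support f L0 L) by auto. rewrite Rminus_diag, Rabs_R0; auto.
Qed.

Lemma rhas_sum_nonneg_sup {T} (f : T -> R) : (forall x, 0 <= f x) -> rbounded f ->
  exists s, rhas_sum f s.
Proof.
  intros Hf [M HM].
  set (E := fun r => exists L, NoDup L /\ r = rlsum f L).
  assert (Hb : bound E). { exists M. intros r [L [HL ->]]. auto. }
  assert (Hne : exists r, E r). { exists 0. exists []. split. constructor. auto. }
  destruct (completeness E Hb Hne) as [s [Hub Hlub]].
  exists s. intros eps He.
  assert (exists L, NoDup L /\ rlsum f L > s - eps).
  { apply NNPP. intro Hn. assert (is_upper_bound E (s - eps)).
    { intros r [L [HL ->]]. apply Rnot_lt_le. intro. apply Hn. exists L. split; auto. }
    specialize (Hlub _ H). lra. }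
  destruct H as [L0 [HL0 Hgt]]. exists L0. intros L HL Hi.
  assert (rlsum f L0 <= rlsum f L) by (apply rlsum_incl_le; auto).
  assert (rlsum f L <= s) by (apply Hub; exists L; auto).
  rewrite Rabs_left1 by lra. lra.
Qed.

Lemma rhas_sum_nonneg_le {T} (f : T -> R) s L : (forall x, 0 <= f x) -> rhas_sum f s -> NoDup L ->
  rlsum f L <= s.
Proof.
  intros Hf Hs HL. apply Rnot_lt_le; intro Hlt.
  destruct (Hs (rlsum f L - s)) as [L0 H0]; [lra|].
  specialize (H0 (nd (L0 ++ L)) (nd_NoDup _) (incl_nd_l _ _)).
  assert (rlsum f L <= rlsum f (nd (L0 ++ L))) by (apply rlsum_incl_le; auto; apply incl_nd_r).
  rewrite Rabs_right in H0 by lra. lra.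
Qed.

Lemma rhas_sum_le_bound {T} (f : T -> R) s M : (forall x, 0 <= f x) -> rhas_sum f s ->
  (forall L, NoDup L -> rlsum f L <= M) -> s <= M.
Proof.
  intros Hf Hs HM. apply Rnot_lt_le; intro Hlt.
  destruct (Hs (s - M)) as [L0 H0]; [lra|].
  specialize (H0 (nd L0) (nd_NoDup _) (fun x H => proj2 (nd_In L0 x) H)).
  specialize (HM (nd L0) (nd_NoDup _)).
  assert (Rabs (rlsum f (nd L0) - s) >= s - M).
  { rewrite Rabs_minus_sym. rewrite Rabs_right; lra. } lra.
Qed.

Lemma rhas_sum_nonneg_ge0 {T} (f : T -> R) s : (forall x, 0 <= f x) -> rhas_sum f s -> 0 <= s.
Proof. intros. apply (rhas_sum_nonneg_le f s []); auto. constructor. Qed.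

Lemma rhas_sum_le {T} (f g : T -> R) s t : (forall x, f x <= g x) -> rhas_sum f s -> rhas_sum g t -> s <= t.
Proof.
  intros Hfg Hs Ht. apply Rnot_lt_le; intro Hlt.
  destruct (Hs ((s - t)/2)) as [L0 H0]; [lra|]. destruct (Ht ((s - t)/2)) as [L1 H1]; [lra|].
  set (L := nd (L0 ++ L1)).
  specialize (H0 L (nd_NoDup _) (incl_nd_l _ _)).
  specialize (H1 L (nd_NoDup _) (incl_nd_r _ _)).
  assert (rlsum f L <= rlsum g L) by (apply rlsum_le; auto).
  apply Rabs_def2 in H0. apply Rabs_def2 in H1. lra.
Qed.

Lemma rhas_sum_term_le {T} (f : T -> R) s x : (forall x, 0 <= f x) -> rhas_sum f s -> f x <= s.
Proof.
  intros Hf Hs. pose proof (rhas_sum_nonneg_le f s [x] Hf Hs).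
  simpl in H. assert (NoDup [x]) by (constructor; [auto|constructor]). specialize (H H0). lra.
Qed.

Lemma rabsb_summable {T} (f : T -> R) : rabsb f -> exists s, rhas_sum f s.
Proof.
  intros [M HM].
  assert (Hp : exists s, rhas_sum (fun x => Rmax (f x) 0) s).
  { apply rhas_sum_nonneg_sup. intros; apply Rmax_r. exists M. intros L HL.
    eapply Rle_trans; [|apply (HM L HL)]. apply rlsum_le. intros.
    unfold Rmax; destruct (Rle_dec (f x) 0); [apply Rabs_pos| rewrite Rabs_right; lra]. }
  assert (Hn : exists s, rhas_sum (fun x => Rmax (- f x) 0) s).
  { apply rhas_sum_nonneg_sup. intros; apply Rmax_r. exists M. intros L HL.
    eapply Rle_trans; [|apply (HM L HL)]. apply rlsum_le. intros.
    unfold Rmax; destruct (Rle_dec (- f x) 0); [apply Rabs_pos| rewrite Rabs_left; lra]. }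
  destruct Hp as [s1 H1]; destruct Hn as [s2 H2]. exists (s1 - s2).
  eapply rhas_sum_ext; [|exact (rhas_sum_sub _ _ _ _ H1 H2)].
  intros; simpl. unfold Rmax. destruct (Rle_dec (f x) 0); destruct (Rle_dec (- f x) 0); lra.
Qed.

Lemma rabsb_le {T} (f g : T -> R) : (forall x, Rabs (f x) <= g x) -> rbounded g -> rabsb f.
Proof.
  intros H [M HM]. exists M. intros L HL. eapply Rle_trans; [|apply (HM L HL)].
  apply rlsum_le; auto.
Qed.

Lemma rbounded_add {T} (f g : T -> R) : rbounded f -> rbounded g -> (forall x, 0 <= f x) ->
  (forall x, 0 <= g x) -> rbounded (fun x => f x + g x).
Proof.
  intros [M1 H1] [M2 H2] _ _. exists (M1 + M2). intros L HL. rewrite rlsum_add.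
  specialize (H1 L HL); specialize (H2 L HL); lra.
Qed.

Lemma rbounded_scal {T} (f : T -> R) c : 0 <= c -> rbounded f -> rbounded (fun x => c * f x).
Proof.
  intros Hc [M H]. exists (c * M). intros L HL. rewrite rlsum_scal.
  specialize (H L HL). nra.
Qed.

Lemma rlsum_prod {A B} (f : A -> R) (g : B -> R) L1 L2 :
  rlsum (fun p => f (fst p) * g (snd p)) (list_prod L1 L2) = rlsum f L1 * rlsum g L2.
Proof.
  induction L1; simpl. ring. rewrite rlsum_app, IHL1.
  assert (rlsum (fun p : A * B => f (fst p) * g (snd p)) (map (fun y => (a, y)) L2) = f a * rlsum g L2).
  { clear. induction L2; simpl. ring. rewrite IHL2. ring. }
  rewrite H. ring.
Qed.

Lemma NoDup_prod {A B} (L1 : list A) (L2 : list B) : NoDup L1 -> NoDup L2 -> NoDup (list_prod L1 L2).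
Proof.
  intros H1 H2. induction H1; simpl. constructor.
  apply NoDup_app; auto.
  - apply FinFun.Injective_map_NoDup; auto. intros u v E; inversion E; auto.
  - intros [a b] Ha Hb. apply in_map_iff in Ha. destruct Ha as [y [E _]]. inversion E; subst.
    apply in_prod_iff in Hb. tauto.
Qed.

Lemma prod_incl {A B} (L : list (A * B)) : incl L (list_prod (nd (map fst L)) (nd (map snd L))).
Proof.
  intros [a b] H. apply in_prod_iff. split; apply nd_In.
  change a with (fst (a, b)); apply in_map; auto.
  change b with (snd (a, b)); apply in_map; auto.
Qed.

Lemma rhas_sum_prod_nonneg {A B} (f : A -> R) (g : B -> R) s t :
  (forall x, 0 <= f x) -> (forall x, 0 <= g x) -> rhas_sum f s -> rhas_sum g t ->
  rhas_sum (fun p => f (fst p) * g (snd p)) (s * t).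
Proof.
  intros Hf Hg Hs Ht eps He.
  assert (Hs0 : 0 <= s) by exact (rhas_sum_nonneg_ge0 f s Hf Hs).
  assert (Ht0 : 0 <= t) by exact (rhas_sum_nonneg_ge0 g t Hg Ht).
  set (eta := Rmin 1 (eps / (s + t + 2))).
  assert (Heta : 0 < eta).
  { unfold eta. apply Rmin_pos; [lra|]. apply Rdiv_lt_0_compat; lra. }
  assert (Heta1 : eta <= 1) by apply Rmin_l.
  assert (Heta2 : eta * (s + t + 2) <= eps).
  { assert (eta <= eps / (s + t + 2)) by apply Rmin_r.
    apply Rmult_le_compat_r with (r := s + t + 2) in H; [|lra].
    unfold Rdiv in H. rewrite Rmult_assoc, Rinv_l, Rmult_1_r in H by lra. auto. }
  destruct (Hs eta Heta) as [L1 H1]; destruct (Ht eta Heta) as [L2 H2].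
  specialize (H1 (nd L1) (nd_NoDup _) (fun x H => proj2 (nd_In L1 x) H)).
  specialize (H2 (nd L2) (nd_NoDup _) (fun x H => proj2 (nd_In L2 x) H)).
  exists (list_prod (nd L1) (nd L2)). intros L HL Hi.
  assert (Hlo : rlsum f (nd L1) * rlsum g (nd L2) <= rlsum (fun p => f (fst p) * g (snd p)) L).
  { rewrite <- rlsum_prod. apply rlsum_incl_le; auto.
    intros; apply Rmult_le_pos; auto. apply NoDup_prod; apply nd_NoDup. }
  assert (Hhi : rlsum (fun p => f (fst p) * g (snd p)) L <= s * t).
  { eapply Rle_trans. apply (rlsum_incl_le _ _ _ (fun x => Rmult_le_pos _ _ (Hf _) (Hg _)) HL (prod_incl L)).
    rewrite rlsum_prod. apply Rmult_le_compat; try (apply rlsum_nonneg; auto).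
    apply (rhas_sum_nonneg_le f s); auto; apply nd_NoDup.
    apply (rhas_sum_nonneg_le g t); auto; apply nd_NoDup. }
  apply Rabs_def2 in H1; apply Rabs_def2 in H2.
  assert (rlsum f (nd L1) <= s) by (apply (rhas_sum_nonneg_le f s); auto; apply nd_NoDup).
  assert (rlsum g (nd L2) <= t) by (apply (rhas_sum_nonneg_le g t); auto; apply nd_NoDup).
  assert (0 <= rlsum f (nd L1)) by (apply rlsum_nonneg; auto).
  assert (0 <= rlsum g (nd L2)) by (apply rlsum_nonneg; auto).
  assert (s * t - rlsum f (nd L1) * rlsum g (nd L2) <= eta * (s + t + 2) - eta).
  { assert (s * t - rlsum f (nd L1) * rlsum g (nd L2) <= eta * t + eta * s) by nra.
    nra. }
  apply Rabs_def1; lra.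
Qed.

Lemma rabsb_pos {T} (f : T -> R) : rabsb f -> exists s, rhas_sum (fun x => Rmax (f x) 0) s.
Proof.
  intros [M HM]. apply rhas_sum_nonneg_sup. intros; apply Rmax_r. exists M. intros L HL.
  eapply Rle_trans; [|apply (HM L HL)]. apply rlsum_le. intros.
  unfold Rmax; destruct (Rle_dec (f x) 0); [apply Rabs_pos| rewrite Rabs_right; lra].
Qed.
Lemma rabsb_neg {T} (f : T -> R) : rabsb f -> exists s, rhas_sum (fun x => Rmax (- f x) 0) s.
Proof.
  intros [M HM]. apply rhas_sum_nonneg_sup. intros; apply Rmax_r. exists M. intros L HL.
  eapply Rle_trans; [|apply (HM L HL)]. apply rlsum_le. intros.
  unfold Rmax; destruct (Rle_dec (- f x) 0); [apply Rabs_pos| rewrite Rabs_left; lra].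
Qed.

Lemma rhas_sum_prod {A B} (f : A -> R) (g : B -> R) s t :
  rabsb f -> rabsb g -> rhas_sum f s -> rhas_sum g t ->
  rhas_sum (fun p => f (fst p) * g (snd p)) (s * t).
Proof.
  intros Af Ag Hs Ht.
  destruct (rabsb_pos f Af) as [s1 P1]; destruct (rabsb_neg f Af) as [s2 N1].
  destruct (rabsb_pos g Ag) as [t1 P2]; destruct (rabsb_neg g Ag) as [t2 N2].
  assert (Es : s = s1 - s2).
  { apply (rhas_sum_unique f); auto. eapply rhas_sum_ext; [|exact (rhas_sum_sub _ _ _ _ P1 N1)].
    intros; simpl. unfold Rmax. destruct (Rle_dec (f x) 0); destruct (Rle_dec (- f x) 0); lra. }
  assert (Et : t = t1 - t2).
  { apply (rhas_sum_unique g); auto. eapply rhas_sum_ext; [|exact (rhas_sum_sub _ _ _ _ P2 N2)].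
    intros; simpl. unfold Rmax. destruct (Rle_dec (g x) 0); destruct (Rle_dec (- g x) 0); lra. }
  assert (Hnn : forall (h : R -> R) y, 0 <= Rmax (h y) 0) by (intros; apply Rmax_r).
  pose proof (rhas_sum_prod_nonneg _ _ _ _ (fun x => Rmax_r _ _) (fun x => Rmax_r _ _) P1 P2) as Q1.
  pose proof (rhas_sum_prod_nonneg _ _ _ _ (fun x => Rmax_r _ _) (fun x => Rmax_r _ _) P1 N2) as Q2.
  pose proof (rhas_sum_prod_nonneg _ _ _ _ (fun x => Rmax_r _ _) (fun x => Rmax_r _ _) N1 P2) as Q3.
  pose proof (rhas_sum_prod_nonneg _ _ _ _ (fun x => Rmax_r _ _) (fun x => Rmax_r _ _) N1 N2) as Q4.
  pose proof (rhas_sum_add _ _ _ _ (rhas_sum_sub _ _ _ _ Q1 Q2) (rhas_sum_sub _ _ _ _ Q4 Q3)) as Q.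
  replace (s * t) with (s1 * t1 - s1 * t2 + (s2 * t2 - s2 * t1)) by (subst; ring).
  eapply rhas_sum_ext; [|exact Q]. intros [a b]; simpl.
  unfold Rmax. destruct (Rle_dec (f a) 0); destruct (Rle_dec (- f a) 0);
  destruct (Rle_dec (g b) 0); destruct (Rle_dec (- g b) 0); nra.
Qed.

Lemma rabsb_prod {A B} (f : A -> R) (g : B -> R) : rabsb f -> rabsb g ->
  rabsb (fun p : A * B => f (fst p) * g (snd p)).
Proof.
  intros [M1 H1] [M2 H2]. exists (M1 * M2). intros L HL.
  eapply Rle_trans. apply (rlsum_incl_le _ _ _ (fun x => Rabs_pos _) HL (prod_incl L)).
  rewrite (rlsum_ext _ (fun p => Rabs (f (fst p)) * Rabs (g (snd p)))) by (intros; apply Rabs_mult).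
  rewrite (rlsum_prod (fun x => Rabs (f x)) (fun y => Rabs (g y))). specialize (H1 _ (nd_NoDup (map fst L))). specialize (H2 _ (nd_NoDup (map snd L))).
  apply Rmult_le_compat; auto; apply rlsum_nonneg; intros; apply Rabs_pos.
Qed.

Lemma Rabs_le2 x y : x <= y -> - x <= y -> Rabs x <= y.
Proof. intros. unfold Rabs; destruct (Rcase_abs x); lra. Qed.

Lemma sq_abs_l a b e : 0 < e -> a * a + b * b < e * e -> Rabs a < e.
Proof. intros. apply Rabs_def1; nra. Qed.
Lemma sq_abs_r a b e : 0 < e -> b * b + a * a < e * e -> Rabs a < e.
Proof. intros. apply Rabs_def1; nra. Qed.

Lemma has_sum_iff {T} (f : T -> C) s :
  has_sum f s <-> rhas_sum (fun x => cre (f x)) (cre s) /\ rhas_sum (fun x => cim (f x)) (cim s).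
Proof.
  split.
  - intros H. split; intros eps He; destruct (H (eps * eps)) as [L0 H0]; try nra;
      exists L0; intros L HL Hi; specialize (H0 L HL Hi);
      unfold Cnorm2, Csub, Cadd, Copp in H0; simpl in H0;
      rewrite ?cre_lsum, ?cim_lsum in H0.
    + eapply sq_abs_l; [exact He| unfold Rminus; exact H0].
    + eapply sq_abs_r; [exact He| unfold Rminus; exact H0].
  - intros [H1 H2] eps He.
    set (eta := Rmin 1 (eps / 2)).
    assert (Heta : 0 < eta) by (apply Rmin_pos; lra).
    assert (Heta1 : eta <= 1) by apply Rmin_l.
    assert (Heta2 : eta <= eps / 2) by apply Rmin_r.
    destruct (H1 eta Heta) as [L1 G1]; destruct (H2 eta Heta) as [L2 G2].
    exists (L1 ++ L2). intros L HL Hi.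
    specialize (G1 L HL (incl_trans' _ _ _ (incl_appl _ (incl_refl _)) Hi)).
    specialize (G2 L HL (incl_trans' _ _ _ (incl_appr _ (incl_refl _)) Hi)).
    unfold Cnorm2, Csub, Cadd, Copp; simpl. rewrite cre_lsum, cim_lsum.
    apply Rabs_def2 in G1; apply Rabs_def2 in G2.
    set (a := rlsum (fun x => cre (f x)) L + - cre s) in *.
    set (b := rlsum (fun x => cim (f x)) L + - cim s) in *.
    assert (a * a < eta * eta) by (unfold a; nra).
    assert (b * b < eta * eta) by (unfold b; nra).
    nra.
Qed.

Lemma has_sum_unique {T} (f : T -> C) s t : has_sum f s -> has_sum f t -> s = t.
Proof.
  intros Hs Ht. apply has_sum_iff in Hs; apply has_sum_iff in Ht.
  apply C_ext; [apply (rhas_sum_unique (fun x => cre (f x)))|apply (rhas_sum_unique (fun x => cim (f x)))]; tauto.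
Qed.

Lemma tsum_eq {T} (f : T -> C) s : has_sum f s -> tsum f = s.
Proof.
  intros H. unfold tsum. apply (has_sum_unique f); auto.
  apply epsilon_spec. exists s; auto.
Qed.

Lemma has_sum_ext {T} (f g : T -> C) s : (forall x, f x = g x) -> has_sum f s -> has_sum g s.
Proof.
  intros E H. replace g with f; auto. apply functional_extensionality; auto.
Qed.

Lemma has_sum_add {T} (f g : T -> C) s t : has_sum f s -> has_sum g t ->
  has_sum (fun x => Cadd (f x) (g x)) (Cadd s t).
Proof.
  rewrite !has_sum_iff. intros [A B] [C' D]. split; simpl.
  apply (rhas_sum_add _ _ _ _ A C'). apply (rhas_sum_add _ _ _ _ B D).
Qed.

Lemma has_sum_mul {T} (f : T -> C) c s : has_sum f s -> has_sum (fun x => Cmul c (f x)) (Cmul c s).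
Proof.
  rewrite !has_sum_iff. intros [A B]. simpl. split.
  - apply rhas_sum_sub; apply rhas_sum_scal; auto.
  - apply rhas_sum_add; apply rhas_sum_scal; auto.
Qed.

Lemma has_sum_zero {T} : has_sum (fun _ : T => C0) C0.
Proof. apply has_sum_iff; simpl; split; apply rhas_sum_zero. Qed.

Lemma has_sum_lsum {T I} (f : I -> T -> C) s L : (forall k, In k L -> has_sum (f k) (s k)) ->
  has_sum (fun x => lsum (fun k => f k x) L) (lsum s L).
Proof.
  induction L; simpl; intros H. apply has_sum_zero.
  apply has_sum_add; auto.
Qed.

Lemma has_sum_finite {T} (f : T -> C) L0 : NoDup L0 -> (forall x, ~ In x L0 -> f x = C0) ->
  has_sum f (lsum f L0).
Proof.
  intros H0 Hz. apply has_sum_iff. rewrite cre_lsum, cim_lsum. split; apply rhas_sum_finite; auto;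
  intros x Hx; rewrite (Hz x Hx); reflexivity.
Qed.

Definition cabsb {T} (f : T -> C) : Prop := rabsb (fun x => cre (f x)) /\ rabsb (fun x => cim (f x)).

Lemma cabsb_summable {T} (f : T -> C) : cabsb f -> exists s, has_sum f s.
Proof.
  intros [A B]. destruct (rabsb_summable _ A) as [a Ha]; destruct (rabsb_summable _ B) as [b Hb].
  exists (mkC a b). apply has_sum_iff; simpl; auto.
Qed.

Lemma has_sum_prod {A B} (f : A -> C) (g : B -> C) s t : cabsb f -> cabsb g -> has_sum f s -> has_sum g t ->
  has_sum (fun p => Cmul (f (fst p)) (g (snd p))) (Cmul s t).
Proof.
  intros [Af1 Af2] [Ag1 Ag2] Hs Ht. apply has_sum_iff in Hs; apply has_sum_iff in Ht.
  destruct Hs as [S1 S2]; destruct Ht as [T1 T2].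
  apply has_sum_iff; simpl; split.
  - apply rhas_sum_sub.
    apply (rhas_sum_prod (fun x => cre (f x)) (fun y => cre (g y))); auto.
    apply (rhas_sum_prod (fun x => cim (f x)) (fun y => cim (g y))); auto.
  - apply rhas_sum_add.
    apply (rhas_sum_prod (fun x => cre (f x)) (fun y => cim (g y))); auto.
    apply (rhas_sum_prod (fun x => cim (f x)) (fun y => cre (g y))); auto.
Qed.

Lemma cabsb_prod {A B} (f : A -> C) (g : B -> C) : cabsb f -> cabsb g ->
  cabsb (fun p => Cmul (f (fst p)) (g (snd p))).
Proof.
  intros [Af1 Af2] [Ag1 Ag2]. split; simpl.
  - apply (rabsb_le _ (fun p => Rabs (cre (f (fst p)) * cre (g (snd p))) + Rabs (cim (f (fst p)) * cim (g (snd p))))).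
    intros; unfold Rminus; eapply Rle_trans; [apply Rabs_triang| rewrite Rabs_Ropp; lra].
    pose proof (rabsb_prod _ _ Af1 Ag1); pose proof (rabsb_prod _ _ Af2 Ag2).
    destruct H as [M1 H1]; destruct H0 as [M2 H2]. exists (M1 + M2). intros L HL. rewrite rlsum_add.
    specialize (H1 L HL); specialize (H2 L HL). lra.
  - apply (rabsb_le _ (fun p => Rabs (cre (f (fst p)) * cim (g (snd p))) + Rabs (cim (f (fst p)) * cre (g (snd p))))).
    intros; apply Rabs_triang.
    pose proof (rabsb_prod _ _ Af1 Ag2); pose proof (rabsb_prod _ _ Af2 Ag1).
    destruct H as [M1 H1]; destruct H0 as [M2 H2]. exists (M1 + M2). intros L HL. rewrite rlsum_add.
    specialize (H1 L HL); specialize (H2 L HL). lra.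
Qed.

Lemma cabsb_add {T} (f g : T -> C) : cabsb f -> cabsb g -> cabsb (fun x => Cadd (f x) (g x)).
Proof.
  intros [A1 A2] [B1 B2]. split; simpl.
  - apply (rabsb_le _ (fun x => Rabs (cre (f x)) + Rabs (cre (g x)))). intros; apply Rabs_triang.
    apply rbounded_add; auto; intros; apply Rabs_pos.
  - apply (rabsb_le _ (fun x => Rabs (cim (f x)) + Rabs (cim (g x)))). intros; apply Rabs_triang.
    apply rbounded_add; auto; intros; apply Rabs_pos.
Qed.

Lemma cabsb_zero {T} : cabsb (fun _ : T => C0).
Proof.
  split; exists 0; intros L HL; simpl; rewrite (rlsum_ext _ (fun _ => 0)).
  - rewrite rlsum_zero; lra.
  - intros; apply Rabs_R0.
  - rewrite rlsum_zero; lra.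
  - intros; apply Rabs_R0.
Qed.

Lemma cabsb_lsum {T I} (f : I -> T -> C) L : (forall k, In k L -> cabsb (f k)) ->
  cabsb (fun x => lsum (fun k => f k x) L).
Proof.
  induction L; simpl; intros H. apply cabsb_zero. apply cabsb_add; auto.
Qed.

Lemma l2_bounded {T} (u : T -> C) : l2 u <-> rbounded (fun i => Cnorm2 (u i)).
Proof. reflexivity. Qed.

Lemma cabsb_inner {T} (u v : T -> C) : l2 u -> l2 v -> cabsb (fun i => Cmul (Cconj (u i)) (v i)).
Proof.
  intros Hu Hv. assert (B : rbounded (fun i => Cnorm2 (u i) + Cnorm2 (v i))).
  { apply rbounded_add; auto; intros; apply Cnorm2_nonneg. }
  split; (eapply rabsb_le; [|exact B]); intros i; unfold Cnorm2; simpl;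
  destruct (u i) as [a b]; destruct (v i) as [c d]; simpl;
  apply Rabs_le2;
  pose proof (Rle_0_sqr (a - c)); pose proof (Rle_0_sqr (a + c));
  pose proof (Rle_0_sqr (b - d)); pose proof (Rle_0_sqr (b + d));
  pose proof (Rle_0_sqr (a - d)); pose proof (Rle_0_sqr (a + d));
  pose proof (Rle_0_sqr (b - c)); pose proof (Rle_0_sqr (b + c));
  unfold Rsqr in *; lra.
Qed.

Lemma inner_has_sum {T} (u v : T -> C) : l2 u -> l2 v ->
  has_sum (fun i => Cmul (Cconj (u i)) (v i)) (inner u v).
Proof.
  intros Hu Hv. destruct (cabsb_summable _ (cabsb_inner u v Hu Hv)) as [s Hs].
  unfold inner. rewrite (tsum_eq _ s); auto.
Qed.

Lemma l2_zero {T} : l2 (fun _ : T => C0).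
Proof. exists 0. intros. unfold Cnorm2; simpl. rewrite (rlsum_ext _ (fun _ => 0)). rewrite rlsum_zero; lra. intros; ring. Qed.

Lemma l2_add {T} (u v : T -> C) : l2 u -> l2 v -> l2 (vadd u v).
Proof.
  intros [M1 H1] [M2 H2]. exists (2 * M1 + 2 * M2). intros L HL.
  eapply Rle_trans. apply (rlsum_le _ (fun i => 2 * Cnorm2 (u i) + 2 * Cnorm2 (v i))).
  intros; unfold vadd, Cnorm2, Cadd; simpl.
  destruct (u x) as [a b]; destruct (v x) as [c d]; simpl.
  pose proof (Rle_0_sqr (a - c)); pose proof (Rle_0_sqr (b - d)); unfold Rsqr in *; lra.
  rewrite rlsum_add, !rlsum_scal. specialize (H1 L HL); specialize (H2 L HL). lra.
Qed.

Lemma l2_scale {T} (u : T -> C) c : l2 u -> l2 (vscale c u).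
Proof.
  intros [M H]. exists (Cnorm2 c * M). intros L HL. unfold vscale.
  rewrite (rlsum_ext _ (fun i => Cnorm2 c * Cnorm2 (u i))) by (intros; apply Cnorm2_mul).
  rewrite rlsum_scal. specialize (H L HL). pose proof (Cnorm2_nonneg c). nra.
Qed.

Lemma l2_lincomb {T} (u v : T -> C) c : l2 u -> l2 v -> l2 (vadd u (vscale c v)).
Proof. intros; apply l2_add; auto; apply l2_scale; auto. Qed.

Lemma l2_ext {T} (u v : T -> C) : (forall i, u i = v i) -> l2 u -> l2 v.
Proof. intros E H. replace v with u; auto. apply functional_extensionality; auto. Qed.

Lemma l2_lsum {T I} (f : I -> T -> C) L : (forall k, In k L -> l2 (f k)) ->
  l2 (fun x => lsum (fun k => f k x) L).
Proof.
  induction L; simpl; intros H. apply l2_zero.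
  apply (l2_ext (vadd (f a) (fun x => lsum (fun k => f k x) L))). intros; reflexivity.
  apply l2_add; auto.
Qed.

Lemma l2_cmul {T} (u : T -> C) c : l2 u -> l2 (fun i => Cmul c (u i)).
Proof. apply l2_scale. Qed.

Lemma inner_lin_r {T} (u v w : T -> C) c : l2 u -> l2 v -> l2 w ->
  inner u (vadd v (vscale c w)) = Cadd (inner u v) (Cmul c (inner u w)).
Proof.
  intros Hu Hv Hw. apply tsum_eq.
  eapply has_sum_ext; [|apply (has_sum_add _ _ _ _ (inner_has_sum u v Hu Hv) (has_sum_mul _ c _ (inner_has_sum u w Hu Hw)))].
  intros; unfold vadd, vscale; simpl; ring.
Qed.

Lemma inner_conj {T} (u v : T -> C) : l2 u -> l2 v -> inner v u = Cconj (inner u v).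
Proof.
  intros Hu Hv. apply tsum_eq. pose proof (inner_has_sum u v Hu Hv) as H.
  apply has_sum_iff in H. destruct H as [H1 H2]. apply has_sum_iff. simpl. split.
  - eapply rhas_sum_ext; [|exact H1]. intros; simpl; ring.
  - replace (- cim (inner u v)) with (-1 * cim (inner u v)) by ring.
    eapply rhas_sum_ext; [|exact (rhas_sum_scal _ (-1) _ H2)]. intros; simpl; ring.
Qed.

Lemma inner_lin_l {T} (u v w : T -> C) c : l2 u -> l2 v -> l2 w ->
  inner (vadd v (vscale c w)) u = Cadd (inner v u) (Cmul (Cconj c) (inner w u)).
Proof.
  intros Hu Hv Hw. rewrite inner_conj, inner_lin_r by (auto; apply l2_lincomb; auto).
  rewrite Cconj_add, Cconj_mul, <- !inner_conj by auto. reflexivity.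
Qed.

Lemma inner_self_has_sum {T} (u : T -> C) : l2 u -> rhas_sum (fun i => Cnorm2 (u i)) (cre (inner u u))
  /\ cim (inner u u) = 0.
Proof.
  intros Hu. pose proof (inner_has_sum u u Hu Hu) as H. apply has_sum_iff in H. destruct H as [H1 H2].
  split.
  - eapply rhas_sum_ext; [|exact H1]. intros; unfold Cnorm2; simpl; ring.
  - apply (rhas_sum_unique (fun x => cim (Cmul (Cconj (u x)) (u x)))); auto.
    eapply rhas_sum_ext; [|exact (@rhas_sum_zero T)]. intros; simpl; ring.
Qed.

Lemma sqnorm_nonneg {T} (u : T -> C) : l2 u -> 0 <= sqnorm u.
Proof.
  intros Hu. destruct (inner_self_has_sum u Hu) as [H _].
  apply (rhas_sum_nonneg_ge0 _ _ (fun i => Cnorm2_nonneg _) H).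
Qed.

Lemma inner_self {T} (u : T -> C) : l2 u -> inner u u = RtoC (sqnorm u).
Proof.
  intros Hu. apply C_ext; simpl. reflexivity. apply (inner_self_has_sum u Hu).
Qed.

Lemma sqnorm_zero {T} (u : T -> C) : l2 u -> sqnorm u = 0 -> forall i, u i = C0.
Proof.
  intros Hu H0 i. destruct (inner_self_has_sum u Hu) as [H _]. fold (sqnorm u) in H.
  pose proof (rhas_sum_term_le _ _ i (fun i => Cnorm2_nonneg _) H). rewrite H0 in H1.
  pose proof (Cnorm2_nonneg (u i)). unfold Cnorm2 in *. apply C_ext; simpl; nra.
Qed.

Lemma Cnorm2_RtoC r : Cnorm2 (RtoC r) = r * r.
Proof. unfold Cnorm2; simpl; ring. Qed.

Lemma cauchy_schwarz {T} (u v : T -> C) : l2 u -> l2 v -> Cnorm2 (inner u v) <= sqnorm u * sqnorm v.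
Proof.
  intros Hu Hv. set (z := inner u v). set (A := sqnorm u). set (B := sqnorm v).
  assert (Key : forall t, 0 <= B - 2 * t * Cnorm2 z + t * t * Cnorm2 z * A).
  { intros t. set (c := Cmul (RtoC (- t)) z).
    pose proof (sqnorm_nonneg (vadd v (vscale c u)) (l2_lincomb _ _ _ Hv Hu)).
    unfold sqnorm in H.
    rewrite inner_lin_l, !inner_lin_r in H by (auto; apply l2_lincomb; auto).
    rewrite (inner_self u), (inner_self v), (inner_conj u v) in H by auto. fold z A B in H.
    unfold c in H. unfold Cnorm2; destruct z as [zr zi]; simpl in *. nra. }
  assert (0 <= A) by apply (sqnorm_nonneg u Hu).
  assert (0 <= Cnorm2 z) by apply Cnorm2_nonneg.
  destruct (Rle_lt_or_eq_dec 0 A H) as [HA|HA].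
  - specialize (Key (/ A)).
    replace (/ A * / A * Cnorm2 z * A) with (Cnorm2 z / A) in Key by (field; lra).
    replace (2 * / A * Cnorm2 z) with (2 * (Cnorm2 z / A)) in Key by (field; lra).
    assert (Cnorm2 z / A <= B) by lra.
    apply Rmult_le_compat_r with (r := A) in H1; [|lra].
    unfold Rdiv in H1; rewrite Rmult_assoc, Rinv_l, Rmult_1_r in H1 by lra. lra.
  - rewrite <- HA in *. destruct (Rle_lt_or_eq_dec 0 (Cnorm2 z) H0) as [Hz|Hz].
    + specialize (Key ((B + 1) / Cnorm2 z)).
      replace (2 * ((B + 1) / Cnorm2 z) * Cnorm2 z) with (2 * (B + 1)) in Key by (field; lra).
      rewrite Rmult_0_r in Key. assert (0 <= B) by apply (sqnorm_nonneg v Hv). lra.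
    + rewrite <- Hz. lra.
Qed.

Section Proj.
Context {T : Type} (P : Op T) (HP : is_projector P).

Lemma proj_l2 v : l2 v -> l2 (P v).
Proof. apply HP. Qed.

Lemma proj_zero : P (fun _ => C0) = (fun _ => C0).
Proof.
  destruct HP as [_ [Hlin _]].
  pose proof (Hlin (fun _ => C0) (fun _ => C0) Cone l2_zero l2_zero) as H.
  assert (E : vadd (fun _ : T => C0) (vscale Cone (fun _ => C0)) = (fun _ => C0)).
  { apply functional_extensionality; intros; unfold vadd, vscale; ring. }
  rewrite E in H. apply functional_extensionality; intros i.
  apply (f_equal (fun f => f i)) in H. unfold vadd, vscale in H.
  set (z := P (fun _ => C0) i) in *.
  assert (Cadd z (Copp z) = Cadd (Cadd z (Cmul Cone z)) (Copp z)) by (rewrite <- H; auto).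
  replace (Cadd z (Copp z)) with C0 in H0 by ring.
  replace (Cadd (Cadd z (Cmul Cone z)) (Copp z)) with z in H0 by ring. auto.
Qed.

Lemma proj_lsum {I} (c : I -> C) (f : I -> T -> C) L : (forall k, In k L -> l2 (f k)) ->
  P (fun i => lsum (fun k => Cmul (c k) (f k i)) L) = (fun i => lsum (fun k => Cmul (c k) (P (f k) i)) L).
Proof.
  induction L; simpl; intros H. apply proj_zero.
  destruct HP as [_ [Hlin _]].
  assert (E : (fun i => Cadd (Cmul (c a) (f a i)) (lsum (fun k => Cmul (c k) (f k i)) L)) =
              vadd (fun i => lsum (fun k => Cmul (c k) (f k i)) L) (vscale (c a) (f a))).
  { apply functional_extensionality; intros; unfold vadd, vscale; ring. }
  rewrite E, Hlin, IHL; auto.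
  apply functional_extensionality; intros; unfold vadd, vscale; ring.
  apply (l2_lsum (fun k i => Cmul (c k) (f k i))). intros; apply l2_cmul; auto.
Qed.

Lemma proj_inner_sym u v : l2 u -> l2 v -> inner u (P v) = inner (P u) (P v).
Proof.
  intros Hu Hv. destruct HP as [Hl2 [_ [Hid Hsa]]].
  rewrite <- (Hid v) at 1 by auto. rewrite Hsa; auto.
Qed.

Lemma proj_inner_self u : l2 u -> inner u (P u) = RtoC (sqnorm (P u)).
Proof.
  intros Hu. rewrite proj_inner_sym by auto. apply inner_self. apply proj_l2; auto.
Qed.

End Proj.

Lemma vsub_lin {T} (x y : T -> C) : vsub x y = vadd x (vscale (RtoC (-1)) y).
Proof. apply functional_extensionality; intros; unfold vsub, vadd, vscale, Csub; apply C_ext; simpl; ring. Qed.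

Section PVM.
Context {T : Type} (A : nat -> Op T) (HA : is_PVM A).

Lemma pvm_proj a : is_projector (A a).
Proof. apply HA. Qed.

Lemma psum_l2 n v : l2 v -> l2 (psum_vec A n v).
Proof.
  intros Hv. unfold psum_vec. apply (l2_lsum (fun a i => A a v i)). intros; apply proj_l2; auto; apply pvm_proj.
Qed.

Lemma inner_psum x n v : l2 x -> l2 v ->
  inner x (psum_vec A n v) = lsum (fun a => inner x (A a v)) (seq 0 n).
Proof.
  intros Hx Hv. apply tsum_eq. unfold psum_vec.
  eapply has_sum_ext; [|apply (has_sum_lsum (fun a i => Cmul (Cconj (x i)) (A a v i)))].
  - intros i; simpl. rewrite <- lsum_mull. auto.
  - intros; apply inner_has_sum; auto. apply proj_l2; auto; apply pvm_proj.
Qed.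

Lemma inner_conv y x : l2 y -> l2 x -> forall eps, 0 < eps -> exists n0, forall n, (n0 <= n)%nat ->
  Cnorm2 (Csub (inner y x) (inner y (psum_vec A n x))) < eps.
Proof.
  intros Hy Hx eps He.
  destruct HA as [_ Hc].
  destruct (Hc x Hx (eps / (sqnorm y + 1))) as [n0 Hn0].
  { apply Rdiv_lt_0_compat; auto. pose proof (sqnorm_nonneg y Hy); lra. }
  exists n0. intros n Hn. specialize (Hn0 n Hn).
  assert (Hr : l2 (vsub x (psum_vec A n x))) by (rewrite vsub_lin; apply l2_lincomb; auto; apply psum_l2; auto).
  assert (E : Csub (inner y x) (inner y (psum_vec A n x)) = inner y (vsub x (psum_vec A n x))).
  { rewrite vsub_lin, inner_lin_r by (auto; apply psum_l2; auto). unfold Csub; apply C_ext; simpl; ring. }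
  rewrite E. eapply Rle_lt_trans. apply cauchy_schwarz; auto.
  pose proof (sqnorm_nonneg y Hy). pose proof (sqnorm_nonneg _ Hr).
  apply Rmult_lt_compat_r with (r := sqnorm y + 1) in Hn0; [|lra].
  unfold Rdiv in Hn0. rewrite Rmult_assoc, Rinv_l, Rmult_1_r in Hn0 by lra. nra.
Qed.

Lemma cre_inner_psum_self x n : l2 x ->
  cre (inner x (psum_vec A n x)) = rlsum (fun a => sqnorm (A a x)) (seq 0 n).
Proof.
  intros Hx. rewrite inner_psum, cre_lsum by auto. apply rlsum_ext. intros a _.
  rewrite proj_inner_self; auto. apply pvm_proj.
Qed.

Lemma rlsum_seq_mono (f : nat -> R) n m : (forall a, 0 <= f a) -> (n <= m)%nat ->
  rlsum f (seq 0 n) <= rlsum f (seq 0 m).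
Proof.
  intros Hf Hnm. replace m with (n + (m - n))%nat by lia. rewrite seq_app, rlsum_app.
  pose proof (rlsum_nonneg f (seq (0 + n) (m - n)) (fun x _ => Hf x)). lra.
Qed.

Lemma bessel x n : l2 x -> rlsum (fun a => sqnorm (A a x)) (seq 0 n) <= sqnorm x.
Proof.
  intros Hx. apply Rnot_lt_le. intro Hlt.
  set (d := rlsum (fun a => sqnorm (A a x)) (seq 0 n) - sqnorm x).
  assert (Hd : 0 < d) by (unfold d; lra).
  assert (Hsx : 0 <= sqnorm x) by (apply sqnorm_nonneg; auto).
  destruct (inner_conv x x Hx Hx (d * d)) as [n0 Hn0]. nra.
  specialize (Hn0 (Nat.max n n0) (Nat.le_max_r _ _)).
  rewrite (inner_self x Hx) in Hn0.
  assert (Hm := rlsum_seq_mono (fun a => sqnorm (A a x)) n (Nat.max n n0)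
    (fun a => sqnorm_nonneg _ (proj_l2 _ (pvm_proj a) _ Hx)) (Nat.le_max_l _ _)).
  rewrite <- (cre_inner_psum_self x (Nat.max n n0) Hx) in Hm.
  unfold Cnorm2, Csub, Cadd, Copp in Hn0; simpl in Hn0.
  set (q := cre (inner x (psum_vec A (Nat.max n n0) x))) in *.
  set (q' := cim (inner x (psum_vec A (Nat.max n n0) x))) in *.
  assert (sqnorm x + - q <= - d) by (unfold d in *; lra).
  assert ((sqnorm x + - q) * (sqnorm x + - q) >= d * d) by nra.
  nra.
Qed.

Lemma sqnorm_proj_le x a : l2 x -> sqnorm (A a x) <= sqnorm x.
Proof.
  intros Hx. pose proof (bessel x (S a) Hx).
  replace (S a) with (a + 1)%nat in H by lia. rewrite seq_app, rlsum_app in H. simpl in H.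
  pose proof (rlsum_nonneg (fun a => sqnorm (A a x)) (seq 0 a) (fun b _ => sqnorm_nonneg _ (proj_l2 _ (pvm_proj b) _ Hx))).
  lra.
Qed.

End PVM.

Lemma tens_formula {IA IB} (e : nat -> IA -> C) (w : nat -> IB -> C) L (P : Op IA) (Q : Op IB)
  (psi : IA * IB -> C) :
  (forall k, l2 (e k)) -> (forall k, l2 (w k)) -> is_projector P -> is_projector Q ->
  (forall i j, psi (i, j) = lsum (fun k => Cmul (e k i) (w k j)) L) ->
  tens P Q psi = (fun ij => lsum (fun l => Cmul (P (e l) (fst ij)) (Q (w l) (snd ij))) L).
Proof.
  intros He Hw HP HQ Hpsi. apply functional_extensionality; intros [i j]. unfold tens; simpl.
  assert (E1 : forall i', (fun j' => psi (i', j')) = (fun j' => lsum (fun k => Cmul (e k i') (w k j')) L)).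
  { intros; apply functional_extensionality; intros; auto. }
  assert (E2 : (fun i' => Q (fun j' => psi (i', j')) j) = (fun i' => lsum (fun k => Cmul (Q (w k) j) (e k i')) L)).
  { apply functional_extensionality; intros i'. rewrite E1.
    rewrite (proj_lsum Q HQ (fun k => e k i') w L) by auto. apply lsum_ext; intros; ring. }
  rewrite E2. rewrite (proj_lsum P HP (fun k => Q (w k) j) e L) by auto.
  apply lsum_ext; intros; ring.
Qed.

Lemma inner_tens {IA IB} (e : nat -> IA -> C) (w : nat -> IB -> C) L (P : Op IA) (Q : Op IB)
  (psi : IA * IB -> C) :
  (forall k, l2 (e k)) -> (forall k, l2 (w k)) -> is_projector P -> is_projector Q ->
  (forall i j, psi (i, j) = lsum (fun k => Cmul (e k i) (w k j)) L) ->
  inner psi (tens P Q psi) =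
  lsum (fun k => lsum (fun l => Cmul (inner (e k) (P (e l))) (inner (w k) (Q (w l)))) L) L.
Proof.
  intros He Hw HP HQ Hpsi. rewrite (tens_formula e w L P Q psi) by auto.
  apply tsum_eq.
  eapply has_sum_ext; cycle 1.
  - apply (has_sum_lsum (fun k ij => lsum (fun l =>
        Cmul (Cmul (Cconj (e k (fst ij))) (P (e l) (fst ij))) (Cmul (Cconj (w k (snd ij))) (Q (w l) (snd ij)))) L)).
    intros k _. apply (has_sum_lsum (fun l ij => 
        Cmul (Cmul (Cconj (e k (fst ij))) (P (e l) (fst ij))) (Cmul (Cconj (w k (snd ij))) (Q (w l) (snd ij))))).
    intros l _.
    apply (has_sum_prod (fun i => Cmul (Cconj (e k i)) (P (e l) i)) (fun j => Cmul (Cconj (w k j)) (Q (w l) j))).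
    + apply cabsb_inner; auto. apply proj_l2; auto.
    + apply cabsb_inner; auto. apply proj_l2; auto.
    + apply inner_has_sum; auto. apply proj_l2; auto.
    + apply inner_has_sum; auto. apply proj_l2; auto.
  - intros [i j]; simpl. destruct (psi (i, j)) eqn:Ep. rewrite <- Ep. rewrite Hpsi.
    rewrite lsum_conj. rewrite <- lsum_mulr.
    apply lsum_ext; intros k _. rewrite <- lsum_mull. apply lsum_ext; intros l _.
    rewrite Cconj_mul. ring.
Qed.

Lemma inner_scale_r {T} (u v : T -> C) c : l2 u -> l2 v -> inner u (vscale c v) = Cmul c (inner u v).
Proof.
  intros Hu Hv. apply tsum_eq. eapply has_sum_ext; [|apply (has_sum_mul _ c _ (inner_has_sum u v Hu Hv))].
  intros; unfold vscale; simpl; ring.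
Qed.
Lemma inner_scale_l {T} (u v : T -> C) c : l2 u -> l2 v -> inner (vscale c v) u = Cmul (Cconj c) (inner v u).
Proof.
  intros Hu Hv. rewrite inner_conj, inner_scale_r, Cconj_mul, <- inner_conj by (auto; apply l2_scale; auto).
  auto.
Qed.
Lemma inner_lsum_r {T} (u : T -> C) (c : nat -> C) (f : nat -> T -> C) L : l2 u -> (forall j, l2 (f j)) ->
  inner u (fun x => lsum (fun j => Cmul (c j) (f j x)) L) = lsum (fun j => Cmul (c j) (inner u (f j))) L.
Proof.
  intros Hu Hf. apply tsum_eq.
  eapply has_sum_ext; [|apply (has_sum_lsum (fun j x => Cmul (c j) (Cmul (Cconj (u x)) (f j x))))].
  - intros; simpl. rewrite <- lsum_mull. apply lsum_ext; intros; ring.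
  - intros; apply has_sum_mul, inner_has_sum; auto.
Qed.
Lemma inner_sub_r {T} (u v w : T -> C) : l2 u -> l2 v -> l2 w ->
  inner u (fun x => Csub (v x) (w x)) = Csub (inner u v) (inner u w).
Proof.
  intros. pose proof (inner_lin_r u v w (RtoC (-1)) H H0 H1).
  replace (fun x => Csub (v x) (w x)) with (vadd v (vscale (RtoC (-1)) w)).
  rewrite H2. apply C_ext; simpl; ring.
  apply functional_extensionality; intros; unfold vadd, vscale, Csub; apply C_ext; simpl; ring.
Qed.

Lemma lsum_kron (f : nat -> C) i n : (i < n)%nat ->
  lsum (fun j => if Nat.eqb i j then f j else C0) (seq 0 n) = f i.
Proof.
  intros H. rewrite (lsum_support _ [i] (seq 0 n)).
  - simpl. rewrite Nat.eqb_refl. ring.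
  - constructor; auto. constructor.
  - apply seq_NoDup.
  - intros x [<-|[]]. apply in_seq; lia.
  - intros x Hx. destruct (Nat.eqb i x) eqn:E; auto. apply Nat.eqb_eq in E. subst. exfalso; apply Hx; simpl; auto.
Qed.

Definition orthonormal {T} (e : nat -> T -> C) (n : nat) : Prop :=
  forall i j, (i < n)%nat -> (j < n)%nat -> inner (e i) (e j) = if Nat.eqb i j then Cone else C0.

Lemma gram_schmidt {T} (u : nat -> T -> C) N : (forall k, l2 (u k)) ->
  exists N' (e : nat -> T -> C) (r : nat -> nat -> C),
    (N' <= N)%nat /\ (forall j, l2 (e j)) /\ orthonormal e N' /\
    (forall k, (k < N)%nat -> forall x, u k x = lsum (fun j => Cmul (r k j) (e j x)) (seq 0 N')).
Proof.
  intros Hu. induction N.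
  - exists 0%nat, (fun _ _ => C0), (fun _ _ => C0). split; [lia|]. split; [intros; apply l2_zero|].
    split; [intros i j Hi; lia|]. intros; lia.
  - destruct IHN as [N' [e [r [HN [He [Hon Hrep]]]]]].
    set (v := u N). assert (Hv : l2 v) by apply Hu. set (a := fun j => inner (e j) v).
    set (p := fun x => lsum (fun j => Cmul (a j) (e j x)) (seq 0 N')).
    set (res := fun x => Csub (v x) (p x)).
    assert (Hp : l2 p) by (apply (l2_lsum (fun j x => Cmul (a j) (e j x))); intros; apply l2_cmul; auto).
    assert (Hres : l2 res).
    { apply (l2_ext (vadd v (vscale (RtoC (-1)) p))). intros; unfold vadd, vscale, res, Csub; apply C_ext; simpl; ring.
      apply l2_lincomb; auto. }
    assert (Horth : forall i, (i < N')%nat -> inner (e i) res = C0).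
    { intros i Hi. unfold res. rewrite inner_sub_r by auto. unfold p. rewrite inner_lsum_r by auto.
      rewrite (lsum_ext _ (fun j => if Nat.eqb i j then a j else C0)).
      rewrite lsum_kron by auto. unfold a. unfold Csub; ring.
      intros j Hj. apply in_seq in Hj. rewrite Hon by lia. destruct (Nat.eqb i j); ring. }
    set (t := sqnorm res).
    assert (Ht : 0 <= t) by (apply sqnorm_nonneg; auto).
    destruct (Rle_lt_or_eq_dec 0 t Ht) as [Htp|Ht0].
    + set (en := vscale (RtoC (/ sqrt t)) res).
      assert (Hen : l2 en) by (apply l2_scale; auto).
      exists (S N'), (fun j => if Nat.eqb j N' then en else e j),
        (fun k j => if Nat.eqb k N then (if Nat.eqb j N' then RtoC (sqrt t) else a j)
                    else (if Nat.eqb j N' then C0 else r k j)).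
      split; [lia|]. split; [intros j; destruct (Nat.eqb j N'); auto|].
      split.
      * intros i j Hi Hj.
        assert (Hst : sqrt t * sqrt t = t) by (apply sqrt_sqrt; lra).
        assert (Hs : 0 < sqrt t) by (apply sqrt_lt_R0; auto).
        destruct (Nat.eqb i N') eqn:Ei; destruct (Nat.eqb j N') eqn:Ej.
        -- apply Nat.eqb_eq in Ei; apply Nat.eqb_eq in Ej; subst. rewrite Nat.eqb_refl.
           unfold en. rewrite inner_scale_l, inner_scale_r by (auto; apply l2_scale; auto).
           rewrite inner_self by auto. fold t. apply C_ext; simpl.
           rewrite <- Hst at 3. field; lra. ring.
        -- apply Nat.eqb_eq in Ei; apply Nat.eqb_neq in Ej. subst.
           replace (Nat.eqb N' j) with false by (symmetry; apply Nat.eqb_neq; auto).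
           unfold en. rewrite inner_scale_l, (inner_conj (e j) res), Horth by (auto; lia). rewrite Cconj_0. ring.
        -- apply Nat.eqb_neq in Ei; apply Nat.eqb_eq in Ej. subst.
           replace (Nat.eqb i N') with false by (symmetry; apply Nat.eqb_neq; auto).
           unfold en. rewrite inner_scale_r, Horth by (auto; lia). ring.
        -- apply Nat.eqb_neq in Ei; apply Nat.eqb_neq in Ej. apply Hon; lia.
      * intros k Hk x. rewrite seq_S, lsum_app. simpl. rewrite Nat.eqb_refl.
        destruct (Nat.eqb k N) eqn:Ek.
        -- apply Nat.eqb_eq in Ek; subst.
           rewrite (lsum_ext _ (fun j => Cmul (a j) (e j x))).
           2:{ intros j Hj; apply in_seq in Hj. replace (Nat.eqb j N') with false by (symmetry; apply Nat.eqb_neq; lia). auto. }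
           fold (p x). unfold en, vscale, res. fold v.
           assert (Hs : 0 < sqrt t) by (apply sqrt_lt_R0; auto).
           apply C_ext; unfold Csub; simpl.
           field; lra. field; lra.
        -- apply Nat.eqb_neq in Ek.
           rewrite (lsum_ext _ (fun j => Cmul (r k j) (e j x))).
           2:{ intros j Hj; apply in_seq in Hj. replace (Nat.eqb j N') with false by (symmetry; apply Nat.eqb_neq; lia). auto. }
           rewrite <- Hrep by lia. ring.
    + exists N', e, (fun k j => if Nat.eqb k N then a j else r k j).
      split; [lia|]. split; auto. split; auto.
      intros k Hk x. destruct (Nat.eqb k N) eqn:Ek.
      * apply Nat.eqb_eq in Ek; subst. fold v. fold (p x).
        pose proof (sqnorm_zero res Hres (eq_sym Ht0) x). unfold res in H.
        assert (H0 := f_equal cre H); assert (H1 := f_equal cim H).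
        unfold Csub in *; simpl in *. apply C_ext; lra.
      * apply Nat.eqb_neq in Ek. apply Hrep; lia.
Qed.

Lemma sq_le_bound z m : 0 <= m -> z * z <= m * m -> z <= m.
Proof. intros. nra. Qed.

Lemma cre_sq_le (z : C) : cre z * cre z <= Cnorm2 z.
Proof. unfold Cnorm2. pose proof (Rle_0_sqr (cim z)). unfold Rsqr in *. lra. Qed.

Lemma cre_mul_bound x y X1 X2 Y1 Y2 : 0 <= X1 -> 0 <= X2 -> 0 <= Y1 -> 0 <= Y2 ->
  Cnorm2 x <= X1 * X2 -> Cnorm2 y <= Y1 * Y2 -> cre (Cmul x y) <= (X1 * Y2 + X2 * Y1) / 2.
Proof.
  intros. apply sq_le_bound. apply Rmult_le_pos; [|lra]. apply Rplus_le_le_0_compat; apply Rmult_le_pos; auto.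
  eapply Rle_trans. apply cre_sq_le. rewrite Cnorm2_mul.
  assert (Cnorm2 x * Cnorm2 y <= (X1 * X2) * (Y1 * Y2)).
  { apply Rmult_le_compat; auto; apply Cnorm2_nonneg. }
  eapply Rle_trans. apply H5.
  pose proof (Rle_0_sqr (X1 * Y2 - X2 * Y1)). unfold Rsqr in H6. nra.
Qed.

Lemma cre_mul_abs d y eta : 0 < eta -> Cnorm2 d <= eta * eta ->
  Rabs (cre (Cmul d y)) <= eta * (1 + Cnorm2 y).
Proof.
  intros He Hd. pose proof (Cnorm2_nonneg y). pose proof (Cnorm2_nonneg d).
  assert (Q : cre (Cmul d y) * cre (Cmul d y) <= (eta * (1 + Cnorm2 y)) * (eta * (1 + Cnorm2 y))).
  { eapply Rle_trans. apply cre_sq_le. rewrite Cnorm2_mul.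
    assert (Cnorm2 d * Cnorm2 y <= eta * eta * Cnorm2 y) by (apply Rmult_le_compat_r; auto).
    assert (eta * eta * Cnorm2 y <= eta * eta * ((1 + Cnorm2 y) * (1 + Cnorm2 y))).
    { apply Rmult_le_compat_l. nra. nra. }
    nra. }
  apply Rabs_le2; apply sq_le_bound; try nra.
Qed.

Lemma rlsum_prod_sym (X Y : nat -> R) L :
  rlsum (fun k => rlsum (fun l => (X k * Y l + X l * Y k) / 2) L) L = rlsum X L * rlsum Y L.
Proof.
  rewrite (rlsum_ext _ (fun k => (/2 * rlsum Y L) * X k + (/2 * rlsum X L) * Y k)).
  - rewrite rlsum_add, !rlsum_scal. field.
  - intros k _. rewrite (rlsum_ext _ (fun l => (/2 * X k) * Y l + (/2 * Y k) * X l)) by (intros; field).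
    rewrite rlsum_add, !rlsum_scal. ring.
Qed.

Lemma eventually_list {I} (L : list I) (P : I -> nat -> Prop) :
  (forall x, In x L -> exists n0, forall n, (n0 <= n)%nat -> P x n) ->
  exists n0, forall x, In x L -> forall n, (n0 <= n)%nat -> P x n.
Proof.
  induction L; intros H. exists 0%nat; intros x [].
  destruct IHL as [n1 H1]. intros; apply H; simpl; auto.
  destruct (H a (or_introl eq_refl)) as [n2 H2].
  exists (Nat.max n1 n2). intros x [<-|Hx] n Hn.
  apply H2; lia. apply H1; auto; lia.
Qed.

Section Main.
Context {IA IB : Type} (psi : IA * IB -> C) (A : nat -> Op IA) (B : nat -> Op IB)
  (HA : is_PVM A) (HB : is_PVM B) (N' : nat) (e : nat -> IA -> C) (w : nat -> IB -> C)
  (He : forall j, l2 (e j)) (Hw : forall j, l2 (w j)) (Hon : orthonormal e N')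
  (Hpsi : forall i j, psi (i, j) = lsum (fun k => Cmul (e k i) (w k j)) (seq 0 N')).

Definition pc a b := cre (inner psi (tens (A a) (B b) psi)).
Definition tt a := rlsum (fun k => sqnorm (A a (e k))) (seq 0 N').
Definition ss b := rlsum (fun k => sqnorm (B b (w k))) (seq 0 N').

Let HPa a := pvm_proj A HA a.
Let HPb b := pvm_proj B HB b.

Lemma pc_formula a b : pc a b = cre (lsum (fun k => lsum (fun l =>
  Cmul (inner (e k) (A a (e l))) (inner (w k) (B b (w l)))) (seq 0 N')) (seq 0 N')).
Proof. unfold pc. rewrite (inner_tens e w (seq 0 N') (A a) (B b) psi); auto. Qed.

Lemma tt_nonneg a : 0 <= tt a.
Proof. apply rlsum_nonneg; intros; apply sqnorm_nonneg, proj_l2; auto. Qed.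
Lemma ss_nonneg b : 0 <= ss b.
Proof. apply rlsum_nonneg; intros; apply sqnorm_nonneg, proj_l2; auto. Qed.

Lemma pc_le a b : pc a b <= tt a * ss b.
Proof.
  rewrite pc_formula, cre_lsum. unfold tt, ss. rewrite <- rlsum_prod_sym.
  apply rlsum_le; intros k _. rewrite cre_lsum. apply rlsum_le; intros l _.
  apply cre_mul_bound; try (apply sqnorm_nonneg, proj_l2; auto).
  - rewrite (proj_inner_sym (A a) (HPa a)) by auto. apply cauchy_schwarz; apply proj_l2; auto.
  - rewrite (proj_inner_sym (B b) (HPb b)) by auto. apply cauchy_schwarz; apply proj_l2; auto.
Qed.

Lemma sqnorm_e k : (k < N')%nat -> sqnorm (e k) = 1.
Proof. intros. unfold sqnorm. rewrite Hon by auto. rewrite Nat.eqb_refl. reflexivity. Qed.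

Lemma tt_sum n : rlsum tt (seq 0 n) <= INR N'.
Proof.
  unfold tt. rewrite rlsum_swap.
  replace (INR N') with (rlsum (fun k => sqnorm (e k)) (seq 0 N')).
  - apply rlsum_le. intros k _. apply bessel; auto.
  - rewrite (rlsum_ext _ (fun _ => 1)). 2:{ intros k Hk; apply in_seq in Hk; apply sqnorm_e; lia. }
    clear. generalize 0%nat. induction N'; intros s; simpl. auto. rewrite IHn. 
    destruct n; simpl; lra.
Qed.

Lemma pc_sum_formula b n : rlsum (fun a => pc a b) (seq 0 n) =
  cre (lsum (fun k => lsum (fun l =>
  Cmul (inner (e k) (psum_vec A n (e l))) (inner (w k) (B b (w l))))  (seq 0 N')) (seq 0 N')).
Proof.
  rewrite (rlsum_ext _ (fun a => cre (lsum (fun k => lsum (fun l =>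
  Cmul (inner (e k) (A a (e l))) (inner (w k) (B b (w l)))) (seq 0 N')) (seq 0 N')))) by (intros; apply pc_formula).
  rewrite <- cre_lsum. f_equal. rewrite lsum_swap. apply lsum_ext; intros k _.
  rewrite lsum_swap. apply lsum_ext; intros l _.
  rewrite inner_psum by auto. rewrite lsum_mulr. auto.
Qed.

Lemma ss_formula b : ss b = cre (lsum (fun k => lsum (fun l =>
  Cmul (inner (e k) (e l)) (inner (w k) (B b (w l))))  (seq 0 N')) (seq 0 N')).
Proof.
  unfold ss. rewrite cre_lsum. apply rlsum_ext. intros k Hk. apply in_seq in Hk.
  rewrite (lsum_ext _ (fun l => if Nat.eqb k l then inner (w k) (B b (w l)) else C0)).
  - rewrite (lsum_kron (fun l => inner (w k) (B b (w l)))) by lia.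
    rewrite (proj_inner_self (B b) (HPb b)) by auto. reflexivity.
  - intros l Hl. apply in_seq in Hl. rewrite Hon by lia. destruct (Nat.eqb k l); ring.
Qed.

Lemma ss_lim b eps : 0 < eps -> exists n0, forall n, (n0 <= n)%nat ->
  ss b <= rlsum (fun a => pc a b) (seq 0 n) + eps.
Proof.
  intros Heps.
  set (K := rlsum (fun k => rlsum (fun l => 1 + Cnorm2 (inner (w k) (B b (w l)))) (seq 0 N')) (seq 0 N')).
  assert (HK : 0 <= K).
  { apply rlsum_nonneg; intros; apply rlsum_nonneg; intros. pose proof (Cnorm2_nonneg (inner (w x) (B b (w x0)))). lra. }
  set (eta := eps / (K + 1)).
  assert (Heta : 0 < eta) by (apply Rdiv_lt_0_compat; lra).
  destruct (eventually_list (list_prod (seq 0 N') (seq 0 N'))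
    (fun kl n => Cnorm2 (Csub (inner (e (fst kl)) (e (snd kl))) (inner (e (fst kl)) (psum_vec A n (e (snd kl))))) < eta * eta))
    as [n0 Hn0].
  { intros [k l] _. simpl. apply inner_conv; auto. nra. }
  exists n0. intros n Hn. rewrite ss_formula, pc_sum_formula.
  rewrite !cre_lsum.
  assert (forall k l, In k (seq 0 N') -> In l (seq 0 N') ->
    cre (Cmul (inner (e k) (e l)) (inner (w k) (B b (w l)))) <=
    cre (Cmul (inner (e k) (psum_vec A n (e l))) (inner (w k) (B b (w l)))) + eta * (1 + Cnorm2 (inner (w k) (B b (w l))))).
  { intros k l Hk Hl. specialize (Hn0 (k, l) (proj2 (in_prod_iff _ _ _ _) (conj Hk Hl)) n Hn). simpl in Hn0.
    pose proof (cre_mul_abs _ (inner (w k) (B b (w l))) eta Heta (Rlt_le _ _ Hn0)).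
    set (y := inner (w k) (B b (w l))) in *.
    set (z1 := inner (e k) (e l)) in *. set (z2 := inner (e k) (psum_vec A n (e l))) in *.
    assert (E : cre (Cmul (Csub z1 z2) y) = cre (Cmul z1 y) - cre (Cmul z2 y)) by (unfold Csub, Cadd, Copp; simpl; ring).
    rewrite E in H. pose proof (Rle_abs (cre (Cmul z1 y) - cre (Cmul z2 y))). lra. }
  eapply Rle_trans.
  { apply rlsum_le; intros k Hk. rewrite cre_lsum. apply rlsum_le; intros l Hl. apply H; auto. }
  rewrite (rlsum_ext _ (fun k => rlsum (fun l => cre (Cmul (inner (e k) (psum_vec A n (e l))) (inner (w k) (B b (w l))))) (seq 0 N')
     + eta * rlsum (fun l => 1 + Cnorm2 (inner (w k) (B b (w l)))) (seq 0 N'))).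
  2:{ intros; rewrite rlsum_add, rlsum_scal; auto. }
  rewrite rlsum_add, rlsum_scal. fold K.
  rewrite (rlsum_ext (fun k => rlsum _ _) (fun k => cre (lsum (fun l => Cmul (inner (e k) (psum_vec A n (e l))) (inner (w k) (B b (w l)))) (seq 0 N')))).
  2:{ intros; rewrite cre_lsum; auto. }
  assert (eta * K <= eps).
  { unfold eta. unfold Rdiv. rewrite Rmult_assoc, (Rmult_comm (/ (K + 1))).
    apply Rmult_le_reg_r with (K + 1); [lra|]. rewrite Rmult_assoc, Rmult_assoc, Rinv_l by lra. nra. }
  lra.
Qed.

End Main.

Lemma schmidt_orthonormal {IA IB} N (psi : IA * IB -> C) : schmidt_rank_le N psi ->
  exists N' (e : nat -> IA -> C) (w : nat -> IB -> C), (N' <= N)%nat /\ (forall j, l2 (e j)) /\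
    (forall j, l2 (w j)) /\ orthonormal e N' /\
    (forall i j, psi (i, j) = lsum (fun k => Cmul (e k i) (w k j)) (seq 0 N')).
Proof.
  intros [u [v [Hu [Hv Hpsi]]]].
  destruct (gram_schmidt u N Hu) as [N' [e [r [HN [He [Hon Hrep]]]]]].
  exists N', e, (fun j y => lsum (fun k => Cmul (r k j) (v k y)) (seq 0 N)).
  split; auto. split; auto. split.
  - intros j. apply (l2_lsum (fun k y => Cmul (r k j) (v k y))). intros; apply l2_cmul; auto.
  - split; auto. intros i y. rewrite Hpsi.
    rewrite (lsum_ext _ (fun k => lsum (fun j => Cmul (Cmul (r k j) (e j i)) (v k y)) (seq 0 N'))).
    + rewrite lsum_swap. apply lsum_ext; intros j _. rewrite <- lsum_mull. apply lsum_ext; intros; ring.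
    + intros k Hk. apply in_seq in Hk. rewrite Hrep by lia. rewrite lsum_mulr. auto.
Qed.

Lemma strategy_bound (S : strategy) N (p : corr) : valid_strategy S -> schmidt_rank_le N (st S) ->
  produces S p ->
  exists t s : nat -> R, (forall a, 0 <= t a) /\ (forall b, 0 <= s b) /\
    (forall a b, p a b 0%nat 0%nat <= t a * s b) /\ (forall n, rlsum t (seq 0 n) <= INR N) /\
    (forall b eps, 0 < eps -> exists n0, forall n, (n0 <= n)%nat ->
        s b <= rlsum (fun a => p a b 0%nat 0%nat) (seq 0 n) + eps).
Proof.
  intros [Hl2 [Hnorm [HA HB]]] Hsch Hprod.
  destruct (schmidt_orthonormal N (st S) Hsch) as [N' [e [w [HN [He [Hw [Hon Hpsi]]]]]]].
  assert (HA0 : is_PVM (MA S 0)) by (apply HA; lia).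
  assert (HB0 : is_PVM (MB S 0)) by (apply HB; lia).
  assert (Ep : forall a b, p a b 0%nat 0%nat = pc (st S) (MA S 0) (MB S 0) a b).
  { intros. rewrite Hprod by lia. reflexivity. }
  exists (tt (MA S 0) N' e), (ss (MB S 0) N' w).
  split; [intros; apply tt_nonneg; auto|].
  split; [intros; apply ss_nonneg; auto|].
  split; [intros; rewrite Ep; apply pc_le; auto|].
  split.
  - intros n. eapply Rle_trans. apply tt_sum; auto. apply le_INR; auto.
  - intros b eps Heps. destruct (ss_lim (st S) (MA S 0) (MB S 0) HA0 HB0 N' e w He Hw Hon Hpsi b eps Heps) as [n0 H0].
    exists n0. intros n Hn. rewrite (rlsum_ext _ (fun a => pc (st S) (MA S 0) (MB S 0) a b)) by (intros; apply Ep).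
    auto.
Qed.

Ltac divfacts x := pose proof (Nat.div_mod_eq x 2); pose proof (Nat.mod_upper_bound x 2 ltac:(lia)).

Ltac eqb_solve := repeat match goal with |- context [Nat.eqb ?x ?y] =>
   first [ replace (Nat.eqb x y) with true by (symmetry; apply Nat.eqb_eq; lia)
         | replace (Nat.eqb x y) with false by (symmetry; apply Nat.eqb_neq; lia) ] end.

Lemma sgn_even m : sgn (2 * m) = 1.
Proof. unfold sgn. rewrite Nat.even_even. auto. Qed.
Lemma sgn_odd m : sgn (2 * m + 1) = -1.
Proof. unfold sgn. rewrite Nat.even_odd. auto. Qed.

Lemma parity a : (a = 2 * (a / 2))%nat \/ (a = 2 * (a / 2) + 1)%nat.
Proof. divfacts a. lia. Qed.

Definition pform a b : R :=
  if Nat.eqb (a / 2) (b / 2) then cc a * cc a * (1 + sgn b * sgn a * cos (mu (b / 2))) / 2 else 0.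

Lemma pstar_00 a b : pstar a b 0%nat 0%nat = pform a b.
Proof.
  unfold pstar, corr_of. change (A_star 0 a) with (ket_proj a).
  change (B_star 0 b) with (eigproj (2 * (b / 2)) (mu (b / 2)) 1 (sgn b)).
  set (Q := eigproj (2 * (b / 2)) (mu (b / 2)) 1 (sgn b)).
  set (f := fun ij : nat * nat => Cmul (Cconj (Psi_inf ij)) (tens (ket_proj a) Q Psi_inf ij)).
  unfold inner. fold f.
  rewrite (tsum_eq f (lsum f [(a, a)])).
  2:{ apply has_sum_finite. constructor; auto; constructor.
      intros [i j] Hn. unfold f, Psi_inf, tens, ket_proj; simpl.
      destruct (Nat.eqb i j) eqn:E1; [|apply C_ext; simpl; ring].
      apply Nat.eqb_eq in E1; subst.
      destruct (Nat.eqb j a) eqn:E2; [|apply C_ext; simpl; ring].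
      apply Nat.eqb_eq in E2; subst. exfalso; apply Hn; simpl; auto. }
  simpl. unfold f, Psi_inf, tens, ket_proj; simpl. rewrite Nat.eqb_refl.
  unfold Q, eigproj, Pi_op, O_op, pform.
  destruct (parity a) as [Ea|Ea]; destruct (parity b) as [Eb|Eb];
  [ assert (Sa : sgn a = 1) by (rewrite Ea; apply sgn_even); assert (Sb : sgn b = 1) by (rewrite Eb; apply sgn_even)
  | assert (Sa : sgn a = 1) by (rewrite Ea; apply sgn_even); assert (Sb : sgn b = -1) by (rewrite Eb; apply sgn_odd)
  | assert (Sa : sgn a = -1) by (rewrite Ea; apply sgn_odd); assert (Sb : sgn b = 1) by (rewrite Eb; apply sgn_even)
  | assert (Sa : sgn a = -1) by (rewrite Ea; apply sgn_odd); assert (Sb : sgn b = -1) by (rewrite Eb; apply sgn_odd) ];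
  rewrite Sa, Sb; divfacts a; divfacts b;
  (destruct (Nat.eqb (a / 2) (b / 2)) eqn:E;
   [ apply Nat.eqb_eq in E; eqb_solve; simpl; field
   | apply Nat.eqb_neq in E; eqb_solve; simpl; field ]).
Qed.

Lemma sum_block (f : nat -> R) m n : (2 * m + 1 < n)%nat ->
  rlsum (fun b => if Nat.eqb (b / 2) m then f b else 0) (seq 0 n) = f (2 * m)%nat + f (2 * m + 1)%nat.
Proof.
  intros H. rewrite (rlsum_support _ [(2 * m)%nat; (2 * m + 1)%nat] (seq 0 n)).
  - unfold rlsum; cbn [fold_right]. divfacts (2 * m)%nat. divfacts (2 * m + 1)%nat. eqb_solve. ring.
  - constructor. intros [E|[]]; lia. constructor; auto. constructor.
  - apply seq_NoDup.
  - intros x Hx. apply in_seq. simpl in Hx. lia.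
  - intros x Hx. divfacts x. destruct (Nat.eqb (x / 2) m) eqn:E; auto.
    apply Nat.eqb_eq in E. exfalso. apply Hx. simpl. lia.
Qed.

Lemma cc_sq a : cc a * cc a = (Cnorm_const * Cnorm_const) / (INR (S a)) ^ 16.
Proof.
  unfold cc. assert (0 < INR (S a)) by (apply lt_0_INR; lia).
  field. lra.
Qed.

Lemma cc_sq_mono a a' : (a <= a')%nat -> cc a' * cc a' <= cc a * cc a.
Proof.
  intros H. rewrite !cc_sq. unfold Rdiv. apply Rmult_le_compat_l.
  apply Rle_0_sqr. apply Rinv_le_contravar. apply pow_lt, lt_0_INR; lia.
  apply pow_incr. split. apply pos_INR. apply le_INR; lia.
Qed.

Lemma pform_pair a m : pform a (2 * m)%nat + pform a (2 * m + 1)%nat =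
  if Nat.eqb (a / 2) m then cc a * cc a else 0.
Proof.
  unfold pform. rewrite sgn_even, sgn_odd. divfacts (2 * m)%nat. divfacts (2 * m + 1)%nat.
  replace ((2 * m) / 2)%nat with m by lia. replace ((2 * m + 1) / 2)%nat with m by lia.
  destruct (Nat.eqb (a / 2) m); field.
Qed.

Definition W m := cc (2 * m)%nat * cc (2 * m)%nat + cc (2 * m + 1)%nat * cc (2 * m + 1)%nat.

Lemma W_mono m m' : (m <= m')%nat -> W m' <= W m.
Proof. intros. unfold W. pose proof (cc_sq_mono (2 * m) (2 * m')). pose proof (cc_sq_mono (2 * m + 1) (2 * m' + 1)).
  assert (2 * m <= 2 * m')%nat by lia. assert (2 * m + 1 <= 2 * m' + 1)%nat by lia. specialize (H0 H2). specialize (H1 H3). lra. Qed.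

Lemma corr_dist_sub (p : corr) delta n b b' : corr_dist_le p pstar delta -> (b < n)%nat -> (b' < n)%nat -> b <> b' ->
  rlsum (fun a0 => Rabs (p a0 b 0%nat 0%nat - pstar a0 b 0%nat 0%nat) + Rabs (p a0 b' 0%nat 0%nat - pstar a0 b' 0%nat 0%nat)) (seq 0 n) <= delta.
Proof.
  intros Hd Hb Hb' Hne. eapply Rle_trans; [|apply (Hd 0%nat 0%nat ltac:(lia) ltac:(lia) n)].
  apply rlsum_le. intros a0 _.
  replace (Rabs (p a0 b 0%nat 0%nat - pstar a0 b 0%nat 0%nat) + Rabs (p a0 b' 0%nat 0%nat - pstar a0 b' 0%nat 0%nat)) with
    (rlsum (fun b0 => Rabs (p a0 b0 0%nat 0%nat - pstar a0 b0 0%nat 0%nat)) [b; b']) by (unfold rlsum; simpl; ring).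
  apply rlsum_incl_le. intros; apply Rabs_pos.
  constructor. intros [E|[]]; auto. constructor; auto. constructor.
  intros x [<-|[<-|[]]]; apply in_seq; lia.
Qed.

Lemma le_eps x y : (forall eps, 0 < eps -> x <= y + eps) -> x <= y.
Proof. intros H. apply Rnot_lt_le; intro. specialize (H ((x - y) / 2)). lra. Qed.

Lemma block_bound (p : corr) delta (s : nat -> R) m : corr_dist_le p pstar delta ->
  (forall b eps, 0 < eps -> exists n0, forall n, (n0 <= n)%nat ->
        s b <= rlsum (fun a => p a b 0%nat 0%nat) (seq 0 n) + eps) ->
  s (2 * m)%nat + s (2 * m + 1)%nat <= W m + delta.
Proof.
  intros Hd Hs. apply le_eps. intros eps He.
  destruct (Hs (2 * m)%nat (eps / 2)) as [n1 H1]; [lra|].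
  destruct (Hs (2 * m + 1)%nat (eps / 2)) as [n2 H2]; [lra|].
  set (n := Nat.max (Nat.max n1 n2) (2 * m + 2)).
  specialize (H1 n ltac:(lia)). specialize (H2 n ltac:(lia)).
  assert (E : rlsum (fun a => p a (2 * m)%nat 0%nat 0%nat) (seq 0 n) + rlsum (fun a => p a (2 * m + 1)%nat 0%nat 0%nat) (seq 0 n)
    <= W m + delta).
  { rewrite <- rlsum_add.
    eapply Rle_trans. apply (rlsum_le _ (fun a => (pform a (2 * m)%nat + pform a (2 * m + 1)%nat) +
      (Rabs (p a (2 * m)%nat 0%nat 0%nat - pstar a (2 * m)%nat 0%nat 0%nat) + Rabs (p a (2 * m + 1)%nat 0%nat 0%nat - pstar a (2 * m + 1)%nat 0%nat 0%nat)))).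
    { intros a _. rewrite !pstar_00.
      pose proof (Rle_abs (p a (2 * m)%nat 0%nat 0%nat - pform a (2 * m)%nat)).
      pose proof (Rle_abs (p a (2 * m + 1)%nat 0%nat 0%nat - pform a (2 * m + 1)%nat)). lra. }
    rewrite rlsum_add. apply Rplus_le_compat.
    - rewrite (rlsum_ext _ (fun a => if Nat.eqb (a / 2) m then cc a * cc a else 0)) by (intros; apply pform_pair).
      rewrite sum_block by lia. unfold W. lra.
    - apply corr_dist_sub; auto; lia. }
  lra.
Qed.

Section Final.
Variables (p : corr) (delta : R) (N : nat) (t s : nat -> R).
Hypotheses (Ht : forall a, 0 <= t a) (Hs0 : forall b, 0 <= s b)
  (Hle : forall a b, p a b 0%nat 0%nat <= t a * s b) (Htsum : forall n, rlsum t (seq 0 n) <= INR N)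
  (Hslim : forall b eps, 0 < eps -> exists n0, forall n, (n0 <= n)%nat ->
        s b <= rlsum (fun a => p a b 0%nat 0%nat) (seq 0 n) + eps)
  (Hd : corr_dist_le p pstar delta) (Hdelta : 0 <= delta).

Definition rowsum (q : nat -> nat -> R) M n a : R :=
  if Nat.leb (2 * M) a then rlsum (fun b => if Nat.eqb (b / 2) (a / 2) then q a b else 0) (seq 0 n) else 0.

Lemma upper_bound M : rlsum (rowsum (fun a b => p a b 0%nat 0%nat) M (4 * M)) (seq 0 (4 * M)) <= INR N * (W M + delta).
Proof.
  eapply Rle_trans. apply (rlsum_le _ (fun a => t a * (W M + delta))).
  - intros a Ha. apply in_seq in Ha. unfold rowsum. destruct (Nat.leb (2 * M) a) eqn:E.
    + apply Nat.leb_le in E. divfacts a. rewrite sum_block by lia.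
      pose proof (Hle a (2 * (a / 2))%nat). pose proof (Hle a (2 * (a / 2) + 1)%nat).
      pose proof (block_bound p delta s (a / 2) Hd Hslim).
      pose proof (W_mono M (a / 2) ltac:(lia)).
      pose proof (Ht a). pose proof (Hs0 (2 * (a / 2))%nat). pose proof (Hs0 (2 * (a / 2) + 1)%nat).
      assert (t a * (s (2 * (a / 2))%nat + s (2 * (a / 2) + 1)%nat) <= t a * (W M + delta)).
      { apply Rmult_le_compat_l; auto. lra. }
      nra.
    + pose proof (Ht a). unfold W. pose proof (Rle_0_sqr (cc (2 * M))). pose proof (Rle_0_sqr (cc (2 * M + 1))).
      unfold Rsqr in *. apply Rmult_le_pos; lra.
  - rewrite (rlsum_ext _ (fun a => (W M + delta) * t a)) by (intros; ring). rewrite rlsum_scal.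
    pose proof (Htsum (4 * M)%nat). unfold W. pose proof (Rle_0_sqr (cc (2 * M))). pose proof (Rle_0_sqr (cc (2 * M + 1))).
    unfold Rsqr in *. rewrite Rmult_comm. apply Rmult_le_compat_r; lra.
Qed.

Lemma lower_eq M : rlsum (rowsum (fun a b => pstar a b 0%nat 0%nat) M (4 * M)) (seq 0 (4 * M)) =
  rlsum (fun a => if Nat.leb (2 * M) a then cc a * cc a else 0) (seq 0 (4 * M)).
Proof.
  apply rlsum_ext. intros a Ha. apply in_seq in Ha. unfold rowsum. destruct (Nat.leb (2 * M) a); auto.
  divfacts a. rewrite sum_block by lia. rewrite !pstar_00, pform_pair. rewrite Nat.eqb_refl. auto.
Qed.

Lemma diff_bound M : rlsum (rowsum (fun a b => pstar a b 0%nat 0%nat) M (4 * M)) (seq 0 (4 * M)) - delta <=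
  rlsum (rowsum (fun a b => p a b 0%nat 0%nat) M (4 * M)) (seq 0 (4 * M)).
Proof.
  assert (rlsum (fun a => rowsum (fun a b => pstar a b 0%nat 0%nat) M (4 * M) a - rowsum (fun a b => p a b 0%nat 0%nat) M (4 * M) a) (seq 0 (4 * M)) <= delta).
  { eapply Rle_trans; [|apply (Hd 0%nat 0%nat ltac:(lia) ltac:(lia) (4 * M)%nat)].
    apply rlsum_le. intros a _. unfold rowsum. destruct (Nat.leb (2 * M) a).
    - unfold Rminus. rewrite <- rlsum_opp, <- rlsum_add. apply rlsum_le. intros b _.
      destruct (Nat.eqb (b / 2) (a / 2)).
      + eapply Rle_trans; [apply Rle_abs|]. right. rewrite <- Rabs_Ropp. f_equal. ring.
      + apply Rle_trans with 0; [lra|apply Rabs_pos].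
    - replace (0 - 0) with 0 by ring. apply rlsum_nonneg. intros; apply Rabs_pos. }
  unfold Rminus in H. rewrite rlsum_add, rlsum_opp in H. lra.
Qed.

Lemma final_ineq M : rlsum (fun a => if Nat.leb (2 * M) a then cc a * cc a else 0) (seq 0 (4 * M)) - delta
  <= INR N * (W M + delta).
Proof.
  rewrite <- lower_eq. eapply Rle_trans. apply diff_bound. apply upper_bound.
Qed.

End Final.

Definition f16 (i : nat) : R := / (INR (S i)) ^ 16.

Lemma f16_pos i : 0 < f16 i.
Proof. unfold f16. apply Rinv_0_lt_compat, pow_lt, lt_0_INR; lia. Qed.

Lemma f16_le i : (1 <= i)%nat -> f16 i <= / INR i - / INR (S i).
Proof.
  intros H. unfold f16. rewrite S_INR. assert (1 <= INR i) by (apply (le_INR 1); lia).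
  assert (Hq : / INR i - / (INR i + 1) = / (INR i * (INR i + 1))) by (field; lra).
  rewrite Hq. apply Rinv_le_contravar. nra.
  apply Rle_trans with ((INR i + 1) ^ 2). simpl; nra.
  apply Rle_pow; [lra|lia].
Qed.

Lemma f16_partial n : (1 <= n)%nat -> rlsum f16 (seq 0 n) <= 2 - / INR n.
Proof.
  intros H. induction n. lia. destruct n.
  - simpl. unfold f16. simpl. lra.
  - rewrite seq_S, rlsum_app. simpl rlsum at 2. specialize (IHn ltac:(lia)).
    pose proof (f16_le (S n) ltac:(lia)). simpl plus. lra.
Qed.

Lemma rlsum_seq_bound (f : nat -> R) L : (forall x, 0 <= f x) -> NoDup L ->
  rlsum f L <= rlsum f (seq 0 (S (list_max L))).
Proof.
  intros Hf HL. apply rlsum_incl_le; auto. intros x Hx. apply in_seq.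
  pose proof (list_max_le L (list_max L)) as [H1 _]. specialize (H1 (le_n _)).
  rewrite Forall_forall in H1. specialize (H1 x Hx). lia.
Qed.

Lemma f16_sum : exists s, rhas_sum f16 s /\ 1 <= s <= 2.
Proof.
  destruct (rhas_sum_nonneg_sup f16) as [s Hs].
  - intros; left; apply f16_pos.
  - exists 2. intros L HL. eapply Rle_trans. apply rlsum_seq_bound; auto. intros; left; apply f16_pos.
    eapply Rle_trans. apply f16_partial; lia. assert (0 < / INR (S (list_max L))) by (apply Rinv_0_lt_compat, lt_0_INR; lia). lra.
  - exists s. split; auto. split.
    + pose proof (rhas_sum_term_le f16 s 0%nat (fun x => Rlt_le _ _ (f16_pos x)) Hs). unfold f16 in H. simpl in H. lra.
    + apply (rhas_sum_le_bound f16 s 2); auto. intros; left; apply f16_pos.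
      intros L HL. eapply Rle_trans. apply rlsum_seq_bound; auto. intros; left; apply f16_pos.
      eapply Rle_trans. apply f16_partial; lia. assert (0 < / INR (S (list_max L))) by (apply Rinv_0_lt_compat, lt_0_INR; lia). lra.
Qed.

Lemma Cnorm_sq : exists s, rhas_sum f16 s /\ 1 <= s <= 2 /\ Cnorm_const * Cnorm_const = / s.
Proof.
  destruct f16_sum as [s [Hs Hb]]. exists s. split; auto. split; auto.
  unfold Cnorm_const.
  rewrite (tsum_eq _ (RtoC s)).
  - simpl. assert (0 < sqrt s) by (apply sqrt_lt_R0; lra).
    rewrite <- Rinv_mult. rewrite sqrt_sqrt by lra. auto.
  - apply has_sum_iff. simpl. split. exact Hs. apply rhas_sum_zero.
Qed.

Lemma cc_sq' s : Cnorm_const * Cnorm_const = / s -> forall a, cc a * cc a = / s * f16 a.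
Proof. intros H a. rewrite cc_sq, H. unfold f16. unfold Rdiv. auto. Qed.

Definition diag_fst (L : list (nat * nat)) : list nat := map fst (filter (fun p => Nat.eqb (fst p) (snd p)) L).

Lemma rlsum_diag (h : nat -> R) L :
  rlsum (fun p : nat * nat => if Nat.eqb (fst p) (snd p) then h (fst p) else 0) L = rlsum h (diag_fst L).
Proof.
  unfold diag_fst. induction L as [|[i j] L IH]; simpl. auto.
  destruct (Nat.eqb i j); simpl; rewrite IH; ring.
Qed.

Lemma diag_NoDup L : NoDup L -> NoDup (diag_fst L).
Proof.
  unfold diag_fst. induction 1 as [|[i j] L Hn HL IH]; simpl. constructor.
  destruct (Nat.eqb i j) eqn:E; simpl; auto. constructor; auto.
  intro Hin. apply in_map_iff in Hin. destruct Hin as [[i' j'] [Ei Hin]]. simpl in Ei; subst.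
  apply filter_In in Hin. destruct Hin as [Hin Eq]. simpl in Eq. apply Nat.eqb_eq in Eq. apply Nat.eqb_eq in E. subst.
  contradiction.
Qed.

Lemma diag_incl L0 L : incl (map (fun i => (i, i)) L0) L -> incl L0 (diag_fst L).
Proof.
  intros H x Hx. unfold diag_fst. apply in_map_iff. exists (x, x). split; auto.
  apply filter_In. split. apply H. apply in_map_iff. exists x; auto. simpl. apply Nat.eqb_refl.
Qed.

Lemma rhas_sum_diag (h : nat -> R) S : rhas_sum h S ->
  rhas_sum (fun p : nat * nat => if Nat.eqb (fst p) (snd p) then h (fst p) else 0) S.
Proof.
  intros H eps He. destruct (H eps He) as [L0 H0]. exists (map (fun i => (i, i)) L0).
  intros L HL Hi. rewrite rlsum_diag. apply H0. apply diag_NoDup; auto. apply diag_incl; auto.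
Qed.

Definition M2 (k : nat) (al be ga : R) : Op nat := fun v i =>
  if Nat.eqb i k then Cadd (Cscale al (v k)) (Cscale be (v (S k)))
  else if Nat.eqb i (S k) then Cadd (Cscale be (v k)) (Cscale ga (v (S k))) else C0.

Lemma l2_finite (v : nat -> C) L0 : NoDup L0 -> (forall i, ~ In i L0 -> v i = C0) -> l2 v.
Proof.
  intros H0 Hz. exists (rlsum (fun i => Cnorm2 (v i)) L0). intros L HL.
  eapply Rle_trans. apply (rlsum_incl_le _ L (nd (L ++ L0))). intros; apply Cnorm2_nonneg. auto. apply incl_nd_l.
  rewrite (rlsum_support _ L0 (nd (L ++ L0))); auto. lra. apply nd_NoDup. apply incl_nd_r.
  intros x Hx. rewrite Hz; auto. unfold Cnorm2; simpl; ring.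
Qed.

Lemma lin2a al be ga x y : al*al+be*be = al -> al*be+be*ga = be -> al*(al*x+be*y) + be*(be*x+ga*y) = al*x+be*y.
Proof. intros H1 H2. replace (al*(al*x+be*y)+be*(be*x+ga*y)) with ((al*al+be*be)*x + (al*be+be*ga)*y) by ring. rewrite H1, H2; ring. Qed.
Lemma lin2b al be ga x y : be*be+ga*ga = ga -> al*be+be*ga = be -> be*(al*x+be*y) + ga*(be*x+ga*y) = be*x+ga*y.
Proof. intros H1 H2. replace (be*(al*x+be*y)+ga*(be*x+ga*y)) with ((al*be+be*ga)*x + (be*be+ga*ga)*y) by ring. rewrite H1, H2; ring. Qed.

Lemma M2_supp k al be ga v i : ~ In i [k; S k] -> M2 k al be ga v i = C0.
Proof. intros H. unfold M2. destruct (Nat.eqb i k) eqn:E1. apply Nat.eqb_eq in E1; subst; exfalso; apply H; simpl; auto.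
  destruct (Nat.eqb i (S k)) eqn:E2; auto. apply Nat.eqb_eq in E2; subst; exfalso; apply H; simpl; auto. Qed.

Lemma NoDup_kSk k : NoDup [k; S k].
Proof. constructor. intros [E|[]]; lia. constructor; auto. constructor. Qed.

Lemma M2_proj k al be ga : al*al+be*be = al -> al*be+be*ga = be -> be*be+ga*ga = ga ->
  is_projector (M2 k al be ga).
Proof.
  intros H1 H2 H3. split; [|split; [|split]].
  - intros v _. apply (l2_finite _ [k; S k]). apply NoDup_kSk. intros; apply M2_supp; auto.
  - intros u v c _ _. apply functional_extensionality; intros i. unfold M2, vadd, vscale.
    destruct (Nat.eqb i k); [|destruct (Nat.eqb i (S k))]; rewrite ?Cscale_mul; ring.
  - intros v _. apply functional_extensionality; intros i. unfold M2 at 1.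
    destruct (Nat.eqb i k) eqn:E1; [|destruct (Nat.eqb i (S k)) eqn:E2]; auto.
    + apply Nat.eqb_eq in E1; subst. unfold M2. rewrite Nat.eqb_refl. 
      replace (Nat.eqb (S k) k) with false by (symmetry; apply Nat.eqb_neq; lia). rewrite Nat.eqb_refl.
      apply C_ext; simpl; apply lin2a; auto.
    + apply Nat.eqb_eq in E2; subst. unfold M2. rewrite !Nat.eqb_refl, E1.
      apply C_ext; simpl; apply lin2b; auto.
    + symmetry. unfold M2. rewrite E1, E2. auto.
  - intros u v Hu Hv. unfold inner.
    rewrite (tsum_eq _ (lsum (fun i => Cmul (Cconj (u i)) (M2 k al be ga v i)) [k; S k])).
    rewrite (tsum_eq _ (lsum (fun i => Cmul (Cconj (M2 k al be ga u i)) (v i)) [k; S k])).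
    + unfold lsum; simpl. unfold M2. rewrite Nat.eqb_refl.
      replace (Nat.eqb (S k) k) with false by (symmetry; apply Nat.eqb_neq; lia). rewrite Nat.eqb_refl.
      apply C_ext; simpl; ring.
    + apply has_sum_finite. apply NoDup_kSk. intros i Hi. rewrite M2_supp by auto. apply C_ext; simpl; ring.
    + apply has_sum_finite. apply NoDup_kSk. intros i Hi. rewrite M2_supp by auto. apply C_ext; simpl; ring.
Qed.

Definition pconds (al be ga : R) : Prop := al*al+be*be = al /\ al*be+be*ga = be /\ be*be+ga*ga = ga.

Lemma pconds_compl al be ga : pconds al be ga -> pconds (1 - al) (- be) (1 - ga).
Proof. intros [H1 [H2 H3]]. unfold pconds. split; [|split]; nra. Qed.

Lemma pconds_bounds al be ga : pconds al be ga -> 0 <= al <= 1 /\ be * be <= 1 /\ 0 <= ga <= 1.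
Proof. intros [H1 [H2 H3]]. pose proof (Rle_0_sqr be). pose proof (Rle_0_sqr al). pose proof (Rle_0_sqr ga). unfold Rsqr in *. nra. Qed.

Lemma M2_pair k al be ga v i : Cadd (M2 k al be ga v i) (M2 k (1 - al) (- be) (1 - ga) v i) =
  if orb (Nat.eqb i k) (Nat.eqb i (S k)) then v i else C0.
Proof.
  unfold M2. destruct (Nat.eqb i k) eqn:E1; [|destruct (Nat.eqb i (S k)) eqn:E2]; simpl.
  - apply Nat.eqb_eq in E1; subst. apply C_ext; simpl; ring.
  - apply Nat.eqb_eq in E2; subst. apply C_ext; simpl; ring.
  - ring.
Qed.

Lemma psum_S {T} (A : nat -> Op T) n v i : psum_vec A (S n) v i = Cadd (psum_vec A n v i) (A n v i).
Proof. unfold psum_vec. rewrite seq_S, lsum_app. simpl. ring. Qed.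

Lemma psum_0 {T} (A : nat -> Op T) v i : psum_vec A 0 v i = C0.
Proof. reflexivity. Qed.

Definition Hb (m : nat) (v : nat -> C) (i : nat) : R :=
  (if Nat.leb m i then 8 * Cnorm2 (v i) else 0) +
  (if orb (Nat.eqb i m) (Nat.eqb i (S m)) then 8 * (Cnorm2 (v m) + Cnorm2 (v (S m))) else 0).

Lemma rlsum_filter {T} (P : T -> bool) (f : T -> R) L :
  rlsum (fun i => if P i then f i else 0) L = rlsum f (filter P L).
Proof. induction L; simpl; auto. destruct (P a); simpl; rewrite IHL; ring. Qed.

Lemma tail_small (v : nat -> C) : l2 v -> forall eta, 0 < eta -> exists m0, forall m, (m0 <= m)%nat ->
  forall L, NoDup L -> (forall i, In i L -> (m <= i)%nat) -> rlsum (fun i => Cnorm2 (v i)) L <= eta.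
Proof.
  intros Hv eta He.
  destruct (rhas_sum_nonneg_sup (fun i => Cnorm2 (v i)) (fun i => Cnorm2_nonneg _) Hv) as [Ssum HS].
  destruct (HS eta He) as [L0 H0].
  specialize (H0 (nd L0) (nd_NoDup _) (fun x H => proj2 (nd_In L0 x) H)).
  exists (S (list_max (nd L0))). intros m Hm L HL Hge.
  assert (HND : NoDup (nd L0 ++ L)).
  { apply NoDup_app; auto. apply nd_NoDup. intros x Hx1 Hx2.
    pose proof (list_max_le (nd L0) (list_max (nd L0))) as [H1 _]. specialize (H1 (le_n _)).
    rewrite Forall_forall in H1. specialize (H1 x Hx1). specialize (Hge x Hx2). lia. }
  pose proof (rhas_sum_nonneg_le _ _ _ (fun i => Cnorm2_nonneg _) HS HND). rewrite rlsum_app in H.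
  apply Rabs_def2 in H0. lra.
Qed.

Lemma resid_small (v : nat -> C) : l2 v -> forall eps, 0 < eps -> exists m0, forall m, (m0 <= m)%nat ->
  forall r : nat -> C, l2 r -> (forall i, Cnorm2 (r i) <= Hb m v i) -> sqnorm r < eps.
Proof.
  intros Hv eps He.
  destruct (tail_small v Hv (eps / 41)) as [m0 Hm0]; [lra|].
  exists m0. intros m Hm r Hr Hri.
  assert (Hf1 : Cnorm2 (v m) <= eps / 41).
  { pose proof (Hm0 m Hm [m] ltac:(constructor; auto; constructor) ltac:(intros i [<-|[]]; lia)). simpl in H. lra. }
  assert (Hf2 : Cnorm2 (v (S m)) <= eps / 41).
  { pose proof (Hm0 m Hm [S m] ltac:(constructor; auto; constructor) ltac:(intros i [<-|[]]; lia)). simpl in H. lra. }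
  destruct (inner_self_has_sum r Hr) as [Hs _]. fold (sqnorm r) in Hs.
  assert (sqnorm r <= 40 * (eps / 41)).
  { apply (rhas_sum_le_bound _ _ _ (fun i => Cnorm2_nonneg _) Hs). intros L HL.
    eapply Rle_trans. apply (rlsum_le _ (Hb m v)). intros; auto.
    unfold Hb. rewrite rlsum_add.
    rewrite (rlsum_filter (fun i => Nat.leb m i) (fun i => 8 * Cnorm2 (v i))).
    rewrite (rlsum_filter (fun i => orb (Nat.eqb i m) (Nat.eqb i (S m))) (fun _ => 8 * (Cnorm2 (v m) + Cnorm2 (v (S m))))).
    rewrite rlsum_scal.
    assert (A1 : rlsum (fun i => Cnorm2 (v i)) (filter (fun i => Nat.leb m i) L) <= eps / 41).
    { apply (Hm0 m); auto. apply NoDup_filter; auto. intros i Hi. apply filter_In in Hi. apply Nat.leb_le; tauto. }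
    assert (A2 : rlsum (fun _ => 8 * (Cnorm2 (v m) + Cnorm2 (v (S m)))) (filter (fun i => orb (Nat.eqb i m) (Nat.eqb i (S m))) L)
       <= rlsum (fun _ => 8 * (Cnorm2 (v m) + Cnorm2 (v (S m)))) [m; S m]).
    { apply rlsum_incl_le. intros; pose proof (Cnorm2_nonneg (v m)); pose proof (Cnorm2_nonneg (v (S m))); lra.
      apply NoDup_filter; auto. intros i Hi. apply filter_In in Hi. destruct Hi as [_ Hi].
      apply Bool.orb_true_iff in Hi. destruct Hi as [Hi|Hi]; apply Nat.eqb_eq in Hi; subst; simpl; auto. }
    simpl in A2. lra. }
  lra.
Qed.

Lemma Cnorm2_add_le z w : Cnorm2 (Cadd z w) <= 2 * Cnorm2 z + 2 * Cnorm2 w.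
Proof. unfold Cnorm2; simpl. pose proof (Rle_0_sqr (cre z - cre w)). pose proof (Rle_0_sqr (cim z - cim w)). unfold Rsqr in *. nra. Qed.
Lemma Cnorm2_scale r z : Cnorm2 (Cscale r z) = r * r * Cnorm2 z.
Proof. unfold Cnorm2; simpl; ring. Qed.

Lemma resid_even (v : nat -> C) n i : Cnorm2 (Csub (v i) (if Nat.ltb i n then v i else C0)) <= Hb n v i.
Proof.
  unfold Hb. assert (0 <= if orb (Nat.eqb i n) (Nat.eqb i (S n)) then 8 * (Cnorm2 (v n) + Cnorm2 (v (S n))) else 0).
  { destruct (orb _ _); [pose proof (Cnorm2_nonneg (v n)); pose proof (Cnorm2_nonneg (v (S n))); lra | lra]. }
  destruct (Nat.ltb i n) eqn:E.
  - apply Nat.ltb_lt in E. replace (Nat.leb n i) with false by (symmetry; apply Nat.leb_gt; lia).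
    replace (Csub (v i) (v i)) with C0 by (unfold Csub; ring). replace (Cnorm2 C0) with 0 by (unfold Cnorm2; simpl; ring). lra.
  - apply Nat.ltb_ge in E. replace (Nat.leb n i) with true by (symmetry; apply Nat.leb_le; lia).
    replace (Csub (v i) C0) with (v i) by (unfold Csub; apply C_ext; simpl; ring). pose proof (Cnorm2_nonneg (v i)). lra.
Qed.

Lemma resid_odd (v : nat -> C) k al be ga i : pconds al be ga ->
  Cnorm2 (Csub (v i) (if Nat.ltb i k then v i else M2 k al be ga v i)) <= Hb k v i.
Proof.
  intros Hp. destruct (pconds_bounds _ _ _ Hp) as [Ba [Bb Bg]].
  pose proof (Cnorm2_nonneg (v k)). pose proof (Cnorm2_nonneg (v (S k))). pose proof (Cnorm2_nonneg (v i)).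
  unfold Hb. destruct (Nat.ltb i k) eqn:E.
  - apply Nat.ltb_lt in E. replace (Nat.leb k i) with false by (symmetry; apply Nat.leb_gt; lia).
    replace (Csub (v i) (v i)) with C0 by (unfold Csub; ring).
    assert (0 <= if orb (Nat.eqb i k) (Nat.eqb i (S k)) then 8 * (Cnorm2 (v k) + Cnorm2 (v (S k))) else 0).
    { destruct (orb _ _); lra. }
    replace (Cnorm2 C0) with 0 by (unfold Cnorm2; simpl; ring). lra.
  - apply Nat.ltb_ge in E. replace (Nat.leb k i) with true by (symmetry; apply Nat.leb_le; lia).
    unfold M2. destruct (Nat.eqb i k) eqn:E1; [|destruct (Nat.eqb i (S k)) eqn:E2]; simpl.
    + apply Nat.eqb_eq in E1; subst.
      replace (Csub (v k) (Cadd (Cscale al (v k)) (Cscale be (v (S k))))) with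
        (Cadd (Cscale (1 - al) (v k)) (Cscale (- be) (v (S k)))) by (apply C_ext; unfold Csub; simpl; ring).
      eapply Rle_trans. apply Cnorm2_add_le. rewrite !Cnorm2_scale.
      assert ((1 - al) * (1 - al) <= 1) by nra. assert (- be * - be <= 1) by nra.
      assert ((1 - al) * (1 - al) * Cnorm2 (v k) <= Cnorm2 (v k)) by nra.
      assert (- be * - be * Cnorm2 (v (S k)) <= Cnorm2 (v (S k))) by nra. lra.
    + apply Nat.eqb_eq in E2; subst.
      replace (Csub (v (S k)) (Cadd (Cscale be (v k)) (Cscale ga (v (S k))))) with
        (Cadd (Cscale (- be) (v k)) (Cscale (1 - ga) (v (S k)))) by (apply C_ext; unfold Csub; simpl; ring).
      eapply Rle_trans. apply Cnorm2_add_le. rewrite !Cnorm2_scale.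
      assert ((1 - ga) * (1 - ga) <= 1) by nra. assert (- be * - be <= 1) by nra.
      assert ((1 - ga) * (1 - ga) * Cnorm2 (v (S k)) <= Cnorm2 (v (S k))) by nra.
      assert (- be * - be * Cnorm2 (v k) <= Cnorm2 (v k)) by nra. lra.
    + replace (Csub (v i) C0) with (v i) by (unfold Csub; apply C_ext; simpl; ring). lra.
Qed.

Definition good_family (F : nat -> Op nat) : Prop :=
  (forall a, is_projector (F a)) /\
  forall n, exists m, (n <= S m)%nat /\
    ((forall v i, psum_vec F n v i = if Nat.ltb i m then v i else C0) \/
     (exists al be ga, pconds al be ga /\ forall v i, psum_vec F n v i = if Nat.ltb i m then v i else M2 m al be ga v i)).

Lemma good_PVM F : good_family F -> is_PVM F.
Proof.
  intros [HP Hn]. split; auto. intros v Hv eps He.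
  destruct (resid_small v Hv eps He) as [m0 Hm0].
  exists (S m0). intros n Hnn. destruct (Hn n) as [m [Hm Hform]].
  assert (Hr : l2 (vsub v (psum_vec F n v))).
  { rewrite vsub_lin. apply l2_lincomb; auto. unfold psum_vec. apply (l2_lsum (fun a i => F a v i)).
    intros k _; apply (HP k); auto. }
  apply (Hm0 m); auto. lia. intros i. unfold vsub.
  destruct Hform as [Hf|[al [be [ga [Hp Hf]]]]]; rewrite Hf.
  - apply resid_even.
  - apply resid_odd; auto.
Qed.

Lemma ket_M2 a : ket_proj a = M2 a 1 0 0.
Proof.
  apply functional_extensionality; intros v; apply functional_extensionality; intros i.
  unfold ket_proj, M2. destruct (Nat.eqb i a) eqn:E.
  - apply Nat.eqb_eq in E; subst. apply C_ext; simpl; ring.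
  - destruct (Nat.eqb i (S a)); auto. apply C_ext; simpl; ring.
Qed.

Lemma pconds_ket : pconds 1 0 0.
Proof. unfold pconds; split; [|split]; ring. Qed.

Lemma eigproj_M2 k mu s eps : eigproj k mu s eps = M2 k ((1 + eps * cos mu) / 2) (eps * (s * sin mu) / 2) ((1 - eps * cos mu) / 2).
Proof.
  apply functional_extensionality; intros v; apply functional_extensionality; intros i.
  unfold eigproj, Pi_op, O_op, M2. destruct (Nat.eqb i k) eqn:E1.
  - apply Nat.eqb_eq in E1; subst. simpl. apply C_ext; simpl; field.
  - destruct (Nat.eqb i (S k)) eqn:E2; simpl.
    + apply Nat.eqb_eq in E2; subst. apply C_ext; simpl; field.
    + apply C_ext; simpl; field.
Qed.

Lemma pconds_eig mu s : s * s = 1 -> pconds ((1 + cos mu) / 2) (s * sin mu / 2) ((1 - cos mu) / 2).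
Proof.
  intros Hs. pose proof (sin2_cos2 mu). unfold Rsqr in H. unfold pconds. split; [|split].
  - replace (s * sin mu / 2 * (s * sin mu / 2)) with ((s * s) * (sin mu * sin mu) / 4) by field. rewrite Hs. nra.
  - field.
  - replace (s * sin mu / 2 * (s * sin mu / 2)) with ((s * s) * (sin mu * sin mu) / 4) by field. rewrite Hs. nra.
Qed.

Lemma lsum_map {T U} (f : U -> C) (g : T -> U) L : lsum f (map g L) = lsum (fun x => f (g x)) L.
Proof. induction L; simpl; auto. rewrite IHL; auto. Qed.

Lemma psum_shift {T} (F : nat -> Op T) n v i :
  psum_vec F (S n) v i = Cadd (F 0%nat v i) (psum_vec (fun a => F (S a)) n v i).
Proof. unfold psum_vec. simpl. rewrite <- seq_shift, lsum_map. auto. Qed.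

Lemma shape0_form n v i : psum_vec ket_proj n v i = if Nat.ltb i n then v i else C0.
Proof.
  induction n. reflexivity. rewrite psum_S, IHn. unfold ket_proj.
  destruct (lt_eq_lt_dec i n) as [[H|H]|H].
  - replace (Nat.ltb i n) with true by (symmetry; apply Nat.ltb_lt; lia).
    replace (Nat.ltb i (S n)) with true by (symmetry; apply Nat.ltb_lt; lia).
    replace (Nat.eqb i n) with false by (symmetry; apply Nat.eqb_neq; lia). ring.
  - subst. replace (Nat.ltb n n) with false by (symmetry; apply Nat.ltb_ge; lia).
    replace (Nat.ltb n (S n)) with true by (symmetry; apply Nat.ltb_lt; lia).
    rewrite Nat.eqb_refl. ring.
  - replace (Nat.ltb i n) with false by (symmetry; apply Nat.ltb_ge; lia).
    replace (Nat.ltb i (S n)) with false by (symmetry; apply Nat.ltb_ge; lia).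
    replace (Nat.eqb i n) with false by (symmetry; apply Nat.eqb_neq; lia). ring.
Qed.

Lemma good_shape0 : good_family ket_proj.
Proof.
  split. intros a. rewrite ket_M2. apply M2_proj; apply pconds_ket.
  intros n. exists n. split. lia. left. apply shape0_form.
Qed.

Ltac bool_solve := repeat match goal with
 | |- context [Nat.eqb ?x ?y] => first [replace (Nat.eqb x y) with true by (symmetry; apply Nat.eqb_eq; lia) | replace (Nat.eqb x y) with false by (symmetry; apply Nat.eqb_neq; lia)]
 | |- context [Nat.leb ?x ?y] => first [replace (Nat.leb x y) with true by (symmetry; apply Nat.leb_le; lia) | replace (Nat.leb x y) with false by (symmetry; apply Nat.leb_gt; lia)]
 | |- context [Nat.ltb ?x ?y] => first [replace (Nat.ltb x y) with true by (symmetry; apply Nat.ltb_lt; lia) | replace (Nat.ltb x y) with false by (symmetry; apply Nat.ltb_ge; lia)]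
 end; cbn [andb orb].

Lemma orb_pair_true i a : (a <= i < S (S a))%nat -> orb (Nat.eqb i a) (Nat.eqb i (S a)) = true.
Proof. intros H. destruct (Nat.eq_dec i a). subst; rewrite Nat.eqb_refl; auto.
  replace (Nat.eqb i (S a)) with true by (symmetry; apply Nat.eqb_eq; lia). apply Bool.orb_true_r. Qed.

Ltac m2_fin := first [rewrite M2_pair | rewrite M2_supp by (intros [?|[?|[]]]; lia) | idtac];
  try (rewrite orb_pair_true by lia); bool_solve; try ring.

Section Blocks.
Variables (F : nat -> Op nat) (al be ga : nat -> R) (o : nat).
Hypotheses (HF0 : forall m, F (2 * m)%nat = M2 (2 * m + o) (al m) (be m) (ga m))
  (HF1 : forall m, F (2 * m + 1)%nat = M2 (2 * m + o) (1 - al m) (- be m) (1 - ga m)).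

Lemma block_forms j : (forall v i, psum_vec F (2 * j) v i = if andb (Nat.leb o i) (Nat.ltb i (2 * j + o)) then v i else C0) /\
  (forall v i, psum_vec F (2 * j + 1) v i = if andb (Nat.leb o i) (Nat.ltb i (2 * j + o)) then v i else M2 (2 * j + o) (al j) (be j) (ga j) v i).
Proof.
  induction j.
  - assert (E0 : forall v i, psum_vec F 0 v i = if andb (Nat.leb o i) (Nat.ltb i (2 * 0 + o)) then v i else C0).
    { intros. rewrite psum_0. destruct (Nat.lt_ge_cases i o); bool_solve; auto. }
    split; auto. intros v i. replace (2 * 0 + 1)%nat with (S 0) by lia. rewrite psum_S, E0.
    replace 0%nat with (2 * 0)%nat at 3 by lia. rewrite HF0.
    destruct (Nat.lt_ge_cases i o); bool_solve; ring.
  - destruct IHj as [_ IH1]. 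
    assert (E2 : forall v i, psum_vec F (2 * S j) v i = if andb (Nat.leb o i) (Nat.ltb i (2 * S j + o)) then v i else C0).
    { intros v i. replace (2 * S j)%nat with (S (2 * j + 1)) by lia. rewrite psum_S, IH1, HF1.
      destruct (Nat.lt_ge_cases i o); [|destruct (Nat.lt_ge_cases i (2 * j + o)); [|destruct (Nat.lt_ge_cases i (2 * j + o + 2))]];
      bool_solve; m2_fin. }
    split; auto. intros v i. replace (2 * S j + 1)%nat with (S (2 * S j)) by lia. rewrite psum_S, E2, HF0.
    destruct (Nat.lt_ge_cases i o); [|destruct (Nat.lt_ge_cases i (2 * S j + o))]; bool_solve; m2_fin.
Qed.
End Blocks.

Definition Fam1 (muf : nat -> R) (s : R) (a : nat) : Op nat := eigproj (2 * (a / 2))%nat (muf (a / 2)%nat) s (sgn a).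
Definition Fam2 (muf : nat -> R) (s : R) (a : nat) : Op nat :=
  match a with O => ket_proj 0 | S a' => eigproj (2 * (a' / 2) + 1)%nat (muf (a' / 2)%nat) s (sgn a') end.

Lemma div2_e m : ((2 * m) / 2 = m)%nat.
Proof. divfacts (2 * m)%nat. lia. Qed.
Lemma div2_o m : ((2 * m + 1) / 2 = m)%nat.
Proof. divfacts (2 * m + 1)%nat. lia. Qed.

Lemma Fam_even o muf s m : eigproj (2 * m + o) (muf m) s 1 =
  M2 (2 * m + o) ((1 + cos (muf m)) / 2) (s * sin (muf m) / 2) ((1 - cos (muf m)) / 2).
Proof. rewrite eigproj_M2. f_equal; field. Qed.
Lemma Fam_odd o muf s m : eigproj (2 * m + o) (muf m) s (-1) =
  M2 (2 * m + o) (1 - (1 + cos (muf m)) / 2) (- (s * sin (muf m) / 2)) (1 - (1 - cos (muf m)) / 2).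
Proof. rewrite eigproj_M2. f_equal; field. Qed.

Lemma good_Fam1 muf s : s * s = 1 -> good_family (Fam1 muf s).
Proof.
  intros Hs.
  set (al := fun m => (1 + cos (muf m)) / 2). set (be := fun m => s * sin (muf m) / 2). set (ga := fun m => (1 - cos (muf m)) / 2).
  assert (H0 : forall m, Fam1 muf s (2 * m)%nat = M2 (2 * m + 0) (al m) (be m) (ga m)).
  { intros m. unfold Fam1. rewrite div2_e, sgn_even. rewrite <- (Nat.add_0_r (2 * m)) at 1. apply Fam_even. }
  assert (H1 : forall m, Fam1 muf s (2 * m + 1)%nat = M2 (2 * m + 0) (1 - al m) (- be m) (1 - ga m)).
  { intros m. unfold Fam1. rewrite div2_o, sgn_odd. rewrite <- (Nat.add_0_r (2 * m)) at 1. apply Fam_odd. }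
  assert (Hp : forall m, pconds (al m) (be m) (ga m)) by (intros; apply pconds_eig; auto).
  split.
  - intros a. destruct (parity a) as [Ea|Ea]; rewrite Ea; [rewrite H0|rewrite H1]; apply M2_proj; 
    try apply (Hp (a / 2)%nat); apply (pconds_compl _ _ _ (Hp (a / 2)%nat)).
  - intros n. destruct (block_forms _ al be ga 0 H0 H1 (n / 2)) as [B0 B1].
    destruct (parity n) as [En|En].
    + exists (2 * (n / 2))%nat. split. lia. left. intros v i. rewrite En at 1. rewrite B0.
      destruct (Nat.leb 0 i) eqn:E; simpl. rewrite Nat.add_0_r. auto. apply Nat.leb_gt in E; lia.
    + exists (2 * (n / 2))%nat. split. lia. right. exists (al (n / 2)%nat), (be (n / 2)%nat), (ga (n / 2)%nat).
      split; auto. intros v i. rewrite En at 1. rewrite B1. rewrite !Nat.add_0_r.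
      destruct (Nat.leb 0 i) eqn:E; simpl; auto. apply Nat.leb_gt in E; lia.
Qed.

Lemma good_Fam2 muf s : s * s = 1 -> good_family (Fam2 muf s).
Proof.
  intros Hs.
  set (al := fun m => (1 + cos (muf m)) / 2). set (be := fun m => s * sin (muf m) / 2). set (ga := fun m => (1 - cos (muf m)) / 2).
  set (G := fun a => Fam2 muf s (S a)).
  assert (H0 : forall m, G (2 * m)%nat = M2 (2 * m + 1) (al m) (be m) (ga m)).
  { intros m. unfold G, Fam2. rewrite div2_e, sgn_even. apply Fam_even. }
  assert (H1 : forall m, G (2 * m + 1)%nat = M2 (2 * m + 1) (1 - al m) (- be m) (1 - ga m)).
  { intros m. unfold G, Fam2. rewrite div2_o, sgn_odd. apply Fam_odd. }
  assert (Hp : forall m, pconds (al m) (be m) (ga m)) by (intros; apply pconds_eig; auto).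
  split.
  - intros [|a]. simpl. rewrite ket_M2. apply M2_proj; apply pconds_ket.
    change (is_projector (G a)).
    destruct (parity a) as [Ea|Ea]; rewrite Ea; [rewrite H0|rewrite H1]; apply M2_proj;
    try apply (Hp (a / 2)%nat); apply (pconds_compl _ _ _ (Hp (a / 2)%nat)).
  - intros [|n].
    + exists 0%nat. split. lia. left. intros; reflexivity.
    + destruct (block_forms G al be ga 1 H0 H1 (n / 2)) as [B0 B1].
      assert (K0 : forall v i, Fam2 muf s 0 v i = if Nat.eqb i 0 then v 0%nat else C0) by reflexivity.
      destruct (parity n) as [En|En].
      * exists (2 * (n / 2) + 1)%nat. split. lia. left. intros v i. rewrite psum_shift, K0. fold G.
        rewrite En at 1. rewrite B0.
        destruct (Nat.eq_dec i 0); [subst|destruct (Nat.lt_ge_cases i (2 * (n / 2) + 1))]; bool_solve; m2_fin.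
      * exists (2 * (n / 2) + 1)%nat. split. lia. right. exists (al (n / 2)%nat), (be (n / 2)%nat), (ga (n / 2)%nat).
        split; auto. intros v i. rewrite psum_shift, K0. fold G. rewrite En at 1. rewrite B1.
        destruct (Nat.eq_dec i 0); [subst|destruct (Nat.lt_ge_cases i (2 * (n / 2) + 1))]; bool_solve; m2_fin.
Qed.

Lemma Psi_norm_sum : rhas_sum (fun ij => Cnorm2 (Psi_inf ij)) 1.
Proof.
  destruct Cnorm_sq as [s [Hs [Hb HK]]].
  assert (H : rhas_sum (fun i => cc i * cc i) 1).
  { eapply rhas_sum_ext; [|replace 1 with (/ s * s) by (field; lra); apply (rhas_sum_scal _ (/ s) _ Hs)].
    intros i; simpl. rewrite (cc_sq' s HK). auto. }
  eapply rhas_sum_ext; [|apply (rhas_sum_diag _ _ H)].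
  intros [i j]. unfold Psi_inf; simpl. destruct (Nat.eqb i j); unfold Cnorm2; simpl; ring.
Qed.

Lemma Psi_l2 : l2 Psi_inf.
Proof.
  exists 1. intros L HL. apply (rhas_sum_nonneg_le _ _ _ (fun x => Cnorm2_nonneg _) Psi_norm_sum HL).
Qed.

Lemma Psi_sqnorm : sqnorm Psi_inf = 1.
Proof.
  destruct (inner_self_has_sum Psi_inf Psi_l2) as [H _].
  apply (rhas_sum_unique _ _ _ H Psi_norm_sum).
Qed.

Lemma PVM_ext (F G : nat -> Op nat) : (forall a, F a = G a) -> is_PVM G -> is_PVM F.
Proof. intros E H. replace F with G; auto. symmetry; apply functional_extensionality; auto. Qed.

Lemma A_star_PVM x : (x < 3)%nat -> is_PVM (A_star x).
Proof.
  intros Hx. destruct x as [|[|[|x]]]; try lia.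
  - apply (PVM_ext _ ket_proj). intros; reflexivity. apply good_PVM, good_shape0.
  - apply (PVM_ext _ (Fam1 (fun _ => PI / 2) 1)). intros; reflexivity. apply good_PVM, good_Fam1. ring.
  - apply (PVM_ext _ (Fam2 (fun _ => PI / 2) 1)). intros [|a]; reflexivity. apply good_PVM, good_Fam2. ring.
Qed.

Lemma B_star_PVM y : (y < 4)%nat -> is_PVM (B_star y).
Proof.
  intros Hy. destruct y as [|[|[|[|y]]]]; try lia.
  - apply (PVM_ext _ (Fam1 mu 1)). intros; reflexivity. apply good_PVM, good_Fam1. ring.
  - apply (PVM_ext _ (Fam1 mu (-1))). intros; reflexivity. apply good_PVM, good_Fam1. ring.
  - apply (PVM_ext _ (Fam2 mu' 1)). intros [|a]; reflexivity. apply good_PVM, good_Fam2. ring.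
  - apply (PVM_ext _ (Fam2 mu' (-1))). intros [|a]; reflexivity. apply good_PVM, good_Fam2. ring.
Qed.

Lemma part1 : in_Cqs pstar.
Proof.
  exists (mkStrat nat nat Psi_inf A_star B_star). split.
  - split; [apply Psi_l2|]. split; [apply Psi_sqnorm|]. split.
    + apply A_star_PVM.
    + apply B_star_PVM.
  - intros a b x y _ _. reflexivity.
Qed.

Lemma pow_strict a b n : 0 <= a < b -> a ^ (S n) < b ^ (S n).
Proof.
  intros [H1 H2]. induction n. simpl; lra.
  change (a * a ^ (S n) < b * b ^ (S n)).
  pose proof (pow_le a (S n) H1). nra.
Qed.

Lemma exp_le_mono x y : x <= y -> exp x <= exp y.
Proof. intros [H|H]. left; apply exp_increasing; auto. subst; lra. Qed.

Lemma count_sum m k c : rlsum (fun a => if Nat.leb m a then c else 0) (seq 0 (m + k)) = INR k * c.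
Proof.
  induction k.
  - rewrite Nat.add_0_r. simpl INR. rewrite Rmult_0_l. apply rlsum_zero_out. intros a Ha. apply in_seq in Ha.
    replace (Nat.leb m a) with false by (symmetry; apply Nat.leb_gt; lia). auto.
  - replace (m + S k)%nat with (S (m + k)) by lia. rewrite seq_S, rlsum_app, IHk. rewrite S_INR.
    unfold rlsum at 1. cbn [fold_right]. rewrite Nat.add_0_l.
    replace (Nat.leb m (m + k)) with true by (symmetry; apply Nat.leb_le; lia). ring.
Qed.

Section Num.
Variables (K : R) (HK1 : 1 / 2 <= K) (HK : forall a, cc a * cc a = K * f16 a).

Lemma lower_sum M : (1 <= M)%nat ->
  2 * INR M * K / (4 ^ 16 * INR M ^ 16) <= rlsum (fun a => if Nat.leb (2 * M) a then cc a * cc a else 0) (seq 0 (4 * M)).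
Proof.
  intros HM. assert (HMr : 1 <= INR M) by (apply (le_INR 1); lia).
  set (c := K / (4 ^ 16 * INR M ^ 16)).
  assert (H4 : 4 ^ 16 <> 0) by (apply pow_nonzero; lra).
  assert (HMn : INR M ^ 16 <> 0) by (apply pow_nonzero; lra).
  replace (2 * INR M * K / (4 ^ 16 * INR M ^ 16)) with (INR (2 * M) * c).
  2:{ unfold c; rewrite mult_INR. replace (INR 2) with 2 by (simpl; lra). field. lra. }
  replace (4 * M)%nat with (2 * M + 2 * M)%nat by lia. rewrite <- (count_sum (2 * M) (2 * M)).
  apply rlsum_le. intros a Ha. apply in_seq in Ha. destruct (Nat.leb (2 * M) a); [|lra].
  rewrite HK. unfold c, f16. unfold Rdiv. apply Rmult_le_compat_l; [lra|].
  apply Rinv_le_contravar. apply pow_lt, lt_0_INR; lia.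
  rewrite <- Rpow_mult_distr. apply pow_incr. split. apply pos_INR.
  replace 4 with (INR 4) by (simpl; lra). rewrite <- mult_INR. apply le_INR. lia.
Qed.

Lemma W_upper M : (1 <= M)%nat -> W M <= 2 * K / (2 ^ 16 * INR M ^ 16).
Proof.
  intros HM. assert (HMr : 1 <= INR M) by (apply (le_INR 1); lia).
  unfold W. rewrite !HK. unfold f16.
  assert (forall a, (2 * M <= a)%nat -> / INR (S a) ^ 16 <= / (2 ^ 16 * INR M ^ 16)).
  { intros a Ha. apply Rinv_le_contravar. apply Rmult_lt_0_compat; apply pow_lt; lra.
    rewrite <- Rpow_mult_distr. apply pow_incr. split. lra.
    replace 2 with (INR 2) by (simpl; lra). rewrite <- mult_INR. apply le_INR. lia. }
  pose proof (H (2 * M)%nat ltac:(lia)). pose proof (H (2 * M + 1)%nat ltac:(lia)).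
  assert (0 <= K) by lra. unfold Rdiv.
  assert (K * / INR (S (2 * M)) ^ 16 <= K * / (2 ^ 16 * INR M ^ 16)) by (apply Rmult_le_compat_l; auto).
  assert (K * / INR (S (2 * M + 1)) ^ 16 <= K * / (2 ^ 16 * INR M ^ 16)) by (apply Rmult_le_compat_l; auto).
  lra.
Qed.
End Num.

Definition cst : R := / (48 * 4 ^ 16).

Lemma part2 : exists c delta0 : R, 0 < c /\ 0 < delta0 /\
    forall delta : R, 0 < delta -> delta <= delta0 ->
    forall N : nat, (0 < N)%nat ->
    forall p : corr, in_CqN N p -> corr_dist_le p pstar delta ->
      c * Rpower delta (- (1 / 32)) <= INR N.
Proof.
  assert (P2 : 2 <= 2 ^ 16) by (apply Rle_trans with (2 ^ 1); [simpl; lra| apply Rle_pow; [lra|lia]]).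
  assert (P4 : 4 ^ 16 = 2 ^ 16 * 2 ^ 16) by (rewrite <- Rpow_mult_distr; f_equal; ring).
  assert (P8 : 8 ^ 16 = 2 ^ 16 * 4 ^ 16) by (rewrite <- Rpow_mult_distr; f_equal; ring).
  assert (P16 : 16 ^ 16 = 4 ^ 16 * 4 ^ 16) by (rewrite <- Rpow_mult_distr; f_equal; ring).
  assert (Q2 : 0 < 2 ^ 16) by (apply pow_lt; lra).
  assert (Q4 : 0 < 4 ^ 16) by (apply pow_lt; lra).
  exists cst, (/ 16 ^ 16). split. unfold cst. apply Rinv_0_lt_compat. lra.
  split. apply Rinv_0_lt_compat, pow_lt; lra.
  intros delta Hd Hd0 N HN p [S [Hval [Hsch Hprod]]] Hdist.
  destruct (strategy_bound S N p Hval Hsch Hprod) as [t [s [Ht [Hs [Hle [Htsum Hslim]]]]]].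
  destruct Cnorm_sq as [ssum [_ [Hsb HKs]]].
  set (K := / ssum).
  assert (HK1 : 1 / 2 <= K).
  { unfold K. apply Rle_trans with (/ 2). lra. apply Rinv_le_contravar; lra. }
  assert (HK : forall a, cc a * cc a = K * f16 a) by (intros; apply cc_sq'; auto).
  set (y := Rpower delta (- (1 / 16))).
  assert (Hy0 : 0 < y) by (unfold y, Rpower; apply exp_pos).
  assert (Hy16 : y ^ 16 = / delta).
  { unfold y. rewrite <- Rpower_pow by (unfold Rpower; apply exp_pos). rewrite Rpower_mult.
    replace (- (1 / 16) * INR 16) with (Ropp 1) by (simpl; field).
    rewrite Rpower_Ropp, Rpower_1; auto. }
  assert (Hd1 : delta <= 1).
  { apply Rle_trans with (/ 16 ^ 16); auto. rewrite <- Rinv_1. apply Rinv_le_contravar. lra.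
    replace 1 with (1 ^ 16) by (apply pow1). apply pow_incr; lra. }
  assert (Hy16b : 16 ^ 16 <= y ^ 16).
  { rewrite Hy16. replace (16 ^ 16) with (/ / 16 ^ 16) by (apply Rinv_inv). apply Rinv_le_contravar; auto. }
  assert (Hy : 16 <= y).
  { apply Rnot_lt_le. intro Hlt. pose proof (pow_strict y 16 15 (conj (Rlt_le _ _ Hy0) Hlt)). lra. }
  set (z := up (y / 16)).
  destruct (archimed (y / 16)) as [Hz1 Hz2]. fold z in Hz1, Hz2.
  assert (Hz0 : (0 <= z)%Z) by (apply le_IZR; lra).
  set (M := Z.to_nat z).
  assert (HMr : INR M = IZR z) by (unfold M; rewrite INR_IZR_INZ, Z2Nat.id; auto).
  assert (HM1 : (1 <= M)%nat).
  { destruct M eqn:EM. simpl in HMr. lra. lia. }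
  assert (HMy : INR M <= y / 8) by lra.
  assert (HMy2 : y / 16 < INR M) by lra.
  assert (HMpos : 1 <= INR M) by (apply (le_INR 1); lia).
  pose proof (final_ineq p delta N t s Ht Hs Hle Htsum Hslim Hdist (Rlt_le _ _ Hd) M) as Hfin.
  pose proof (lower_sum K HK1 HK M HM1) as Hlow.
  pose proof (W_upper K HK1 HK M HM1) as Hup.
  set (X := K / INR M ^ 16).
  assert (HMp : 0 < INR M ^ 16) by (apply pow_lt; lra).
  assert (HX : 0 < X) by (unfold X; apply Rdiv_lt_0_compat; lra).
  replace (2 * INR M * K / (4 ^ 16 * INR M ^ 16)) with (2 * INR M * X / 4 ^ 16) in Hlow by (unfold X; field; lra).
  replace (2 * K / (2 ^ 16 * INR M ^ 16)) with (2 * X / 2 ^ 16) in Hup by (unfold X; field; lra).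
  assert (HMd : INR M ^ 16 <= / (delta * 8 ^ 16)).
  { apply Rle_trans with ((y / 8) ^ 16). apply pow_incr; lra.
    unfold Rdiv. rewrite Rpow_mult_distr, Hy16, pow_inv. rewrite Rinv_mult. lra. }
  assert (HdX : delta <= X / 4 ^ 16).
  { unfold X. apply Rmult_le_reg_r with (INR M ^ 16); auto.
    replace (K / INR M ^ 16 / 4 ^ 16 * INR M ^ 16) with (K / 4 ^ 16) by (field; repeat split; first [lra | apply pow_nonzero; lra]).
    apply Rle_trans with (delta * / (delta * 8 ^ 16)). apply Rmult_le_compat_l; lra.
    replace (delta * / (delta * 8 ^ 16)) with (/ 8 ^ 16) by (field; repeat split; first [lra | apply pow_nonzero; lra]).
    rewrite P8. apply Rmult_le_reg_r with (2 ^ 16 * 4 ^ 16). nra.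
    replace (/ (2 ^ 16 * 4 ^ 16) * (2 ^ 16 * 4 ^ 16)) with 1 by (field; repeat split; first [lra | apply pow_nonzero; lra]).
    replace (K / 4 ^ 16 * (2 ^ 16 * 4 ^ 16)) with (K * 2 ^ 16) by (field; repeat split; first [lra | apply pow_nonzero; lra]). nra. }
  assert (HNp : 0 <= INR N) by apply pos_INR.
  assert (Hcomb : INR M * X / 4 ^ 16 <= INR N * (3 * X)).
  { assert (INR N * (W M + delta) <= INR N * (2 * X / 2 ^ 16 + X / 4 ^ 16)).
    { apply Rmult_le_compat_l; auto. lra. }
    assert (2 * X / 2 ^ 16 + X / 4 ^ 16 <= 3 * X).
    { assert (X / 2 ^ 16 <= X) by (unfold Rdiv; apply Rle_trans with (X * / 2); [apply Rmult_le_compat_l; [lra|apply Rinv_le_contravar; lra] | lra]).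
      assert (X / 4 ^ 16 <= X) by (unfold Rdiv; apply Rle_trans with (X * / 2); [apply Rmult_le_compat_l; [lra|apply Rinv_le_contravar; lra] | lra]).
      lra. }
    assert (INR N * (2 * X / 2 ^ 16 + X / 4 ^ 16) <= INR N * (3 * X)) by (apply Rmult_le_compat_l; auto).
    assert (2 * INR M * X / 4 ^ 16 - X / 4 ^ 16 <= INR N * (W M + delta)) by lra.
    assert (INR M * X / 4 ^ 16 <= 2 * INR M * X / 4 ^ 16 - X / 4 ^ 16).
    { unfold Rdiv. assert (0 <= X * / 4 ^ 16) by (apply Rmult_le_pos; [lra|left; apply Rinv_0_lt_compat; lra]). nra. }
    lra. }
  assert (HMN : INR M <= INR N * (3 * 4 ^ 16)).
  { apply Rmult_le_reg_r with (X / 4 ^ 16). apply Rdiv_lt_0_compat; lra.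
    replace (INR N * (3 * 4 ^ 16) * (X / 4 ^ 16)) with (INR N * (3 * X)) by (field; repeat split; first [lra | apply pow_nonzero; lra]). lra. }
  assert (Hexp : Rpower delta (- (1 / 32)) <= y).
  { unfold y, Rpower. apply exp_le_mono. assert (ln delta <= 0).
    { destruct Hd1 as [Hl|He]. left. rewrite <- ln_1. apply ln_increasing; lra. rewrite He, ln_1. lra. }
    nra. }
  unfold cst.
  apply Rle_trans with (/ (48 * 4 ^ 16) * y). apply Rmult_le_compat_l; [left; apply Rinv_0_lt_compat; lra| auto].
  apply Rmult_le_reg_l with (48 * 4 ^ 16). lra.
  replace (48 * 4 ^ 16 * (/ (48 * 4 ^ 16) * y)) with y by (field; repeat split; first [lra | apply pow_nonzero; lra]).
  lra.
Qed.


Theorem theorem1 :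
  in_Cqs pstar /\
  exists c delta0 : R, 0 < c /\ 0 < delta0 /\
    forall delta : R, 0 < delta -> delta <= delta0 ->
    forall N : nat, (0 < N)%nat ->
    forall p : corr, in_CqN N p -> corr_dist_le p pstar delta ->
      c * Rpower delta (- (1 / 32)) <= INR N.
Proof.
  split. apply part1. apply part2.
Qed.
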